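(* Let $\gamma\in\{0,1,\dots,5\}$ and $\mathfrak{q}_\gamma=\frac94\sum_{\nu=0}^{2\gamma}(\overline{\mathfrak{C}}_{\gamma\gamma\nu})^2\left(\frac2{\omega_\nu^2}+\frac1{\omega_\nu^2-(2\omega_\gamma)^2}\right)$. Then $8\mathfrak{q}_\gamma>3\mathfrak{C}_{\gamma\gamma\gamma\gamma}$. Moreover, if $\xi=\{\xi^m\}_{m\ge0}$ with $\xi^m=\mathfrak{K}_\gamma\mathbf{1}(m=\gamma)$ and $\mathfrak{K}_\gamma=\pm2\omega_\gamma\sqrt{\frac{2}{8\mathfrak{q}_\gamma-3\mathfrak{C}_{\gamma\gamma\gamma\gamma}}}$, then $\mathfrak{M}_-(\xi)=0$.
   Context: $\omega_n=n+2$; $\mathfrak{e}_n(x)=\mathfrak{N}_nP_n^{(3/2,3/2)}(\cos x)$ with $P_n^{(3/2,3/2)}$ the Jacobi polynomial and $\mathfrak{N}_n=\frac{\sqrt{\omega_n\Gamma(1+n)\Gamma(4+n)}}{2\sqrt2\,\Gamma(5/2+n)}$; $\overline{\mathfrak{C}}_{ijm}=\int_0^\pi\mathfrak{e}_i\mathfrak{e}_j\mathfrak{e}_m\sin^4x\,dx$, $\mathfrak{C}_{ijkm}=\int_0^\pi\mathfrak{e}_i\mathfrak{e}_j\mathfrak{e}_k\mathfrak{e}_m\sin^6x\,dx$. $(\mathfrak{A}\xi)^m=\omega_m^2\xi^m$, $(\mathfrak{f}^{(3)}(u))^m=-\sum_{i,j,k}\mathfrak{C}_{ijkm}u^iu^ju^k$,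 $\Phi^t(\xi)=\{\xi^n\cos(\omega_nt)\}_n$, $\langle\mathfrak{f}^{(3)}\rangle(\xi)=\frac1{2\pi}\int_0^{2\pi}\Phi^t[\mathfrak{f}^{(3)}(\Phi^t(\xi))]dt$, and $\mathfrak{M}_-(\xi)=-\mathfrak{A}\xi+\langle\mathfrak{f}^{(3)}\rangle(\xi)+\mathfrak{F}_0(\xi)$ with $(\mathfrak{F}_0(\xi))^m=\frac94\sum_{\kappa,\nu\ge0}\overline{\mathfrak{C}}_{\kappa\nu m}\sum_{i,j\ge0,\ \omega_i-\omega_j\ne\pm\omega_\nu}\frac{\overline{\mathfrak{C}}_{ij\nu}}{\omega_\nu^2-(\omega_i-\omega_j)^2}\xi^i\xi^j\xi^\kappa\sum_\pm\mathbf{1}(\omega_i-\omega_j\pm\omega_\kappa\pm\omega_m=0)+\frac94\sum_{\kappa,\nu\ge0}\overline{\mathfrak{C}}_{\kappa\nu m}\sum_{i,j\ge0,\ \omega_i+\omega_j\ne\pm\omega_\nu}\frac{\overline{\mathfrak{C}}_{ij\nu}}{\omega_\nu^2-(\omega_i+\omega_j)^2}\xi^i\xi^j\xi^\kappa\sum_\pm\mathbf{1}(\omega_i+\omega_j\pm\omega_\kappa\pm\omega_m=0)$. *)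

(* Defs.v *)
From Stdlib Require Import Reals Lra.
From Coquelicot Require Import Coquelicot.
Open Scope R_scope.

Definition omega (n : nat) : R := INR n + 2.

Definition Gamma (x : R) : R :=
  RInt_gen (fun t => Rpower t (x - 1) * exp (- t)) (at_right 0) (Rbar_locally p_infty).

Fixpoint falling (r : R) (k : nat) : R :=
  match k with O => 1 | S k' => falling r k' * (r - INR k') end.
Definition gen_binom (r : R) (k : nat) : R := falling r k / INR (Factorial.fact k).

(* Jacobi polynomial P_n^(a,b)(x) (DLMF 18.5.8):
   sum_{s=0}^n binom(n+a, n-s) binom(n+b, s) ((x-1)/2)^s ((x+1)/2)^(n-s) *)
Definition jacobi (a b : R) (n : nat) (x : R) : R :=
  sum_n (fun s => gen_binom (INR n + a) (n - s) * gen_binom (INR n + b) s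
                  * ((x - 1) / 2) ^ s * ((x + 1) / 2) ^ (n - s)) n.

Definition Nfrak (n : nat) : R :=
  sqrt (omega n * Gamma (1 + INR n) * Gamma (4 + INR n))
  / (2 * sqrt 2 * Gamma (5 / 2 + INR n)).

Definition efrak (n : nat) (x : R) : R := Nfrak n * jacobi (3 / 2) (3 / 2) n (cos x).

Definition Cbar (i j m : nat) : R :=
  RInt (fun x => efrak i x * efrak j x * efrak m x * sin x ^ 4) 0 PI.

Definition C4 (i j k m : nat) : R :=
  RInt (fun x => efrak i x * efrak j x * efrak k x * efrak m x * sin x ^ 6) 0 PI.

Definition seqR := nat -> R.

Definition Aop (xi : seqR) : seqR := fun m => omega m ^ 2 * xi m.

Definition f3 (u : seqR) : seqR := fun m =>
  - Series (fun i => Series (fun j => Series (fun k => C4 i j k m * u i * u j * u k))).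

Definition Phi (t : R) (xi : seqR) : seqR := fun n => xi n * cos (omega n * t).

Definition avg_f3 (xi : seqR) : seqR := fun m =>
  / (2 * PI) * RInt (fun t => Phi t (f3 (Phi t xi)) m) 0 (2 * PI).

Definition ind0 (x : R) : R := if Req_EM_T x 0 then 1 else 0.

Definition sum_pm (a b c : R) : R :=
  ind0 (a + b + c) + ind0 (a + b - c) + ind0 (a - b + c) + ind0 (a - b - c).

(* 1/(omega_nu^2 - d^2) restricted to d <> +- omega_nu (0 on the excluded terms) *)
Definition res_coef (nu : nat) (d : R) : R :=
  if Req_EM_T d (omega nu) then 0
  else if Req_EM_T d (- omega nu) then 0
  else / (omega nu ^ 2 - d ^ 2).

Definition F0 (xi : seqR) : seqR := fun m =>
  9 / 4 * Series (fun kappa => Series (fun nu => Cbar kappa nu m *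
     Series (fun i => Series (fun j =>
        res_coef nu (omega i - omega j) * Cbar i j nu * xi i * xi j * xi kappa
        * sum_pm (omega i - omega j) (omega kappa) (omega m))))) +
  9 / 4 * Series (fun kappa => Series (fun nu => Cbar kappa nu m *
     Series (fun i => Series (fun j =>
        res_coef nu (omega i + omega j) * Cbar i j nu * xi i * xi j * xi kappa
        * sum_pm (omega i + omega j) (omega kappa) (omega m))))).

Definition M_minus (xi : seqR) : seqR := fun m =>
  - Aop xi m + avg_f3 xi m + F0 xi m.

Definition qfrak (g : nat) : R :=
  9 / 4 * sum_n (fun nu => Cbar g g nu ^ 2 *
     (2 / omega nu ^ 2 + 1 / (omega nu ^ 2 - (2 * omega g) ^ 2))) (2 * g).

(* Main.v *)
Require Import Defs.
From Stdlib Require Import Reals.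
From Coquelicot Require Import Coquelicot.
Open Scope R_scope.
From Stdlib Require Import Lra Lia ZArith.
Open Scope R_scope.

Lemma is_derive_eq (f : R -> R) (x l l' : R) : is_derive f x l -> l = l' -> is_derive f x l'.
Proof. intros H ->; exact H. Qed.

Definition mon (s t : nat) (y : R) : R := ((y - 1) / 2) ^ s * ((y + 1) / 2) ^ t.
Definition D1 (s t : nat) (y : R) : R :=
  / 2 * (INR s * mon (pred s) t y + INR t * mon s (pred t) y).
Definition D2 (s t : nat) (y : R) : R :=
  / 2 * (INR s * D1 (pred s) t y + INR t * D1 s (pred t) y).

Lemma D_mon s t y : is_derive (mon s t) y (D1 s t y).
Proof.
  unfold mon, D1.
  eapply is_derive_eq.
  - apply (is_derive_mult (fun y => ((y - 1) / 2) ^ s) (fun y => ((y + 1) / 2) ^ t)).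
    + apply is_derive_pow. auto_derive; [easy|reflexivity].
    + apply is_derive_pow. auto_derive; [easy|reflexivity].
    + intros; apply Rmult_comm.
  - unfold plus, mult; simpl. unfold mon. field.
Qed.

Lemma D_D1 s t y : is_derive (D1 s t) y (D2 s t y).
Proof.
  unfold D1 at 1. unfold D2.
  eapply is_derive_eq.
  - apply (is_derive_scal (fun y => INR s * mon (pred s) t y + INR t * mon s (pred t) y) y (/2)).
    apply (is_derive_plus (fun y => INR s * mon (pred s) t y) (fun y => INR t * mon s (pred t) y)).
    + apply (is_derive_scal (mon (pred s) t) y (INR s)). apply D_mon.
    + apply (is_derive_scal (mon s (pred t)) y (INR t)). apply D_mon.
  - unfold plus, scal; simpl. unfold mult; simpl. reflexivity.
Qed.

Lemma mon_ode s t y :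
  (1 - y ^ 2) * D2 s t y - 5 * y * D1 s t y + (INR s + INR t) * (INR s + INR t + 4) * mon s t y =
  (INR t * (INR t + 3/2) + INR s * (INR s + 3/2)) * mon s t y
  - INR s * (INR s + 3/2) * mon (pred s) (S t) y
  - INR t * (INR t + 3/2) * mon (S s) (pred t) y.
Proof.
  unfold D2, D1, mon.
  destruct s as [|[|s]]; destruct t as [|[|t]]; simpl pred; rewrite ?S_INR; simpl INR; simpl pow; field.
Qed.

Lemma gb_S r k : gen_binom r (S k) * INR (S k) = gen_binom r k * (r - INR k).
Proof.
  unfold gen_binom. simpl falling.
  change (Factorial.fact (S k)) with (S k * Factorial.fact k)%nat.
  rewrite mult_INR. pose proof (Factorial.lt_O_fact k) as H.
  assert (INR (Factorial.fact k) <> 0) by (apply not_0_INR; lia).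
  assert (INR (S k) <> 0) by (apply not_0_INR; lia).
  field; auto.
Qed.

Definition Amp (n s : nat) : R :=
  gen_binom (INR n + 3/2) (n - s) * gen_binom (INR n + 3/2) s.

Lemma A_ratio n j : (j < n)%nat ->
  Amp n (S j) * INR (S j) * (INR (S j) + 3/2) = Amp n j * INR (n - j) * (INR (n - j) + 3/2).
Proof.
  intro H. unfold Amp.
  remember (n - S j)%nat as m.
  assert (Hm : (n - j = S m)%nat) by lia. rewrite Hm.
  assert (Hn : INR n = INR m + INR j + 1) by (rewrite <- plus_INR, <- S_INR; f_equal; lia).
  pose proof (gb_S (INR n + 3/2) j) as E1.
  pose proof (gb_S (INR n + 3/2) m) as E2.
  transitivity (gen_binom (INR n + 3 / 2) m * (gen_binom (INR n + 3 / 2) (S j) * INR (S j)) * (INR (S j) + 3/2)); [ring|].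
  rewrite E1.
  transitivity (gen_binom (INR n + 3 / 2) (S m) * INR (S m) * gen_binom (INR n + 3 / 2) j * (INR (S m) + 3/2)); [|ring].
  rewrite E2. rewrite !S_INR, Hn. ring.
Qed.

Lemma sum_n_extR (a b : nat -> R) N : (forall n, (n <= N)%nat -> a n = b n) -> sum_n a N = sum_n b N.
Proof. apply sum_n_ext_loc. Qed.

Lemma telesc (g : nat -> R) n : sum_n (fun s => g (S s) - g s) n = g (S n) - g O.
Proof.
  induction n as [|n IH].
  - rewrite sum_O; reflexivity.
  - rewrite sum_Sn, IH. unfold plus; simpl. ring.
Qed.

Lemma telesc2 (g h : nat -> R) n :
  sum_n (fun s => (g (S s) - g s) + (h s - h (S s))) n = g (S n) - g O + h O - h (S n).
Proof.
  induction n as [|n IH].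
  - rewrite sum_O; simpl; ring.
  - rewrite sum_Sn, IH. unfold plus; simpl. ring.
Qed.

Lemma sum_n_lin3 (f g h : nat -> R) a b c n :
  sum_n (fun s => a * f s + b * g s + c * h s) n = a * sum_n f n + b * sum_n g n + c * sum_n h n.
Proof.
  induction n as [|n IH].
  - rewrite !sum_O; reflexivity.
  - rewrite !sum_Sn, IH. unfold plus; simpl. ring.
Qed.

Definition Pj (n : nat) (y : R) : R := sum_n (fun s => Amp n s * mon s (n - s) y) n.
Definition P1 (n : nat) (y : R) : R := sum_n (fun s => Amp n s * D1 s (n - s) y) n.
Definition P2 (n : nat) (y : R) : R := sum_n (fun s => Amp n s * D2 s (n - s) y) n.

Lemma Pj_jacobi n y : jacobi (3/2) (3/2) n y = Pj n y.
Proof. unfold jacobi, Pj, Amp, mon. apply sum_n_ext; intro s. rewrite Rmult_assoc. reflexivity. Qed.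

Lemma D_Pj n y : is_derive (Pj n) y (P1 n y).
Proof.
  unfold Pj, P1. apply (is_derive_sum_n (fun k y => Amp n k * mon k (n-k) y) n y (fun k => Amp n k * D1 k (n-k) y)). intros k _.
  apply (is_derive_scal (mon k (n - k)) y (Amp n k)). apply D_mon.
Qed.

Lemma D_P1 n y : is_derive (P1 n) y (P2 n y).
Proof.
  unfold P1, P2. apply (is_derive_sum_n (fun k y => Amp n k * D1 k (n-k) y) n y (fun k => Amp n k * D2 k (n-k) y)). intros k _.
  apply (is_derive_scal (D1 k (n - k)) y (Amp n k)). apply D_D1.
Qed.

Lemma jacobi_ode n y :
  (1 - y ^ 2) * P2 n y - 5 * y * P1 n y + INR n * (INR n + 4) * Pj n y = 0.
Proof.
  unfold P1, P2, Pj.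
  transitivity (sum_n (fun s => (1 - y ^ 2) * (Amp n s * D2 s (n - s) y) + (- (5 * y)) * (Amp n s * D1 s (n - s) y)
     + (INR n * (INR n + 4)) * (Amp n s * mon s (n - s) y)) n).
  { rewrite sum_n_lin3. ring. }
  set (EE := fun k => match k with O => 0 | S j => Amp n j * INR (n - j) * (INR (n - j) + 3/2) * mon j (n - j) y end).
  set (FF := fun k => if (k <=? n)%nat then Amp n k * INR k * (INR k + 3/2) * mon k (n - k) y else 0).
  transitivity (sum_n (fun s => (EE (S s) - EE s) + (FF s - FF (S s))) n).
  - apply sum_n_extR. intros s Hs.
    assert (Hn : INR n = INR s + INR (n - s)) by (rewrite <- plus_INR; f_equal; lia).
    transitivity (Amp n s * ((1 - y ^ 2) * D2 s (n - s) y - 5 * y * D1 s (n - s) y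
       + (INR s + INR (n - s)) * (INR s + INR (n - s) + 4) * mon s (n - s) y)); [rewrite <- Hn; ring|].
    rewrite mon_ode.
    assert (E1 : EE s = Amp n s * INR s * (INR s + 3/2) * mon (pred s) (S (n - s)) y).
    { unfold EE. destruct s as [|j].
      - simpl INR. ring.
      - rewrite <- (A_ratio n j) by lia. simpl pred.
        replace (S (n - S j)) with (n - j)%nat by lia. reflexivity. }
    assert (E2 : FF (S s) = Amp n s * INR (n - s) * (INR (n - s) + 3/2) * mon (S s) (pred (n - s)) y).
    { unfold FF. destruct (Nat.leb_spec (S s) n) as [Hl|Hl].
      - rewrite (A_ratio n s) by lia. replace (pred (n - s)) with (n - S s)%nat by lia. reflexivity.
      - replace (n - s)%nat with O by lia. simpl INR. ring. }
    assert (E3 : FF s = Amp n s * INR s * (INR s + 3/2) * mon s (n - s) y).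
    { unfold FF. destruct (Nat.leb_spec s n); [reflexivity|lia]. }
    rewrite E1, E2, E3. unfold EE. ring.
  - rewrite telesc2. unfold EE, FF.
    replace (n - n)%nat with O by lia.
    destruct (Nat.leb_spec (S n) n); [lia|].
    destruct (Nat.leb_spec 0 n); [|lia]. simpl INR. ring.
Qed.

Definition qf (n j : nat) (x : R) : R := Pj n (cos x) * cos x ^ j * sin x ^ 4.

Lemma ex_derive_Pjcos n x : ex_derive (fun x => Pj n (cos x)) x.
Proof.
  apply (ex_derive_comp (Pj n) cos x).
  - exists (P1 n (cos x)). apply D_Pj.
  - apply ex_derive_Reals_1. reg.
Qed.

Lemma cont_qf n j x : continuous (qf n j) x.
Proof.
  apply (ex_derive_continuous (K:=R_AbsRing) (V:=R_NormedModule) (qf n j)). unfold qf.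
  apply (ex_derive_mult (fun x => Pj n (cos x) * cos x ^ j) (fun x => sin x ^ 4)).
  - apply (ex_derive_mult (fun x => Pj n (cos x)) (fun x => cos x ^ j)).
    + apply ex_derive_Pjcos.
    + apply ex_derive_Reals_1. reg.
  - apply ex_derive_Reals_1. reg.
Qed.

Lemma ex_RInt_qf n j a b : ex_RInt (qf n j) a b.
Proof. apply (ex_RInt_continuous (V:=R_CompleteNormedModule)). intros; apply cont_qf. Qed.

Lemma ex_derive_qf n j x : ex_derive (qf n j) x.
Proof.
  unfold qf.
  apply (ex_derive_mult (fun x => Pj n (cos x) * cos x ^ j) (fun x => sin x ^ 4)).
  - apply (ex_derive_mult (fun x => Pj n (cos x)) (fun x => cos x ^ j)).
    + apply ex_derive_Pjcos.
    + apply ex_derive_Reals_1. reg.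
  - apply ex_derive_Reals_1. reg.
Qed.

Lemma D_f n x : is_derive (fun x => Pj n (cos x)) x (- sin x * P1 n (cos x)).
Proof.
  eapply is_derive_eq.
  - apply (is_derive_comp (Pj n) cos x). apply D_Pj. auto_derive; [easy|reflexivity].
  - unfold scal; simpl; unfold mult; simpl. ring.
Qed.

Lemma D_P1cos n x : is_derive (fun x => P1 n (cos x)) x (- sin x * P2 n (cos x)).
Proof.
  eapply is_derive_eq.
  - apply (is_derive_comp (P1 n) cos x). apply D_P1. auto_derive; [easy|reflexivity].
  - unfold scal; simpl; unfold mult; simpl. ring.
Qed.

Lemma sin_sq x : sin x ^ 2 = 1 - cos x ^ 2.
Proof. pose proof (sin2_cos2 x) as H. unfold Rsqr in H. simpl. lra. Qed.

Definition Phi_ n x := - sin x ^ 5 * P1 n (cos x).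

Lemma D_Phi n x : is_derive (Phi_ n) x (- (INR n * (INR n + 4)) * sin x ^ 4 * Pj n (cos x)).
Proof.
  unfold Phi_.
  eapply is_derive_eq.
  - apply (is_derive_mult (fun x => - sin x ^ 5) (fun x => P1 n (cos x))).
    + auto_derive; [easy|reflexivity].
    + apply D_P1cos.
    + intros; apply Rmult_comm.
  - unfold plus, mult; simpl.
    pose proof (jacobi_ode n (cos x)) as E.
    assert (E' : INR n * (INR n + 4) * Pj n (cos x) = 5 * cos x * P1 n (cos x) - (1 - cos x ^ 2) * P2 n (cos x)) by lra.
    transitivity (- sin x ^ 4 * (INR n * (INR n + 4) * Pj n (cos x))); [|ring].
    rewrite E', <- sin_sq. ring.
Qed.

Definition Psi_ (k : nat) x := - INR k * sin x ^ 5 * cos x ^ (pred k).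

Lemma D_Psi k x : is_derive (Psi_ k) x
  (sin x ^ 4 * (INR k * (INR k - 1) * cos x ^ (pred (pred k)) - INR k * (INR k + 4) * cos x ^ k)).
Proof.
  unfold Psi_. destruct k as [|[|k]].
  - auto_derive; [easy|]. simpl. ring.
  - auto_derive; [easy|]. simpl. ring.
  - assert (H : is_derive (fun x => - INR (S (S k)) * sin x ^ 5 * cos x ^ pred (S (S k))) x
       (- INR (S (S k)) * (5 * sin x ^ 4 * cos x ^ (S (S k)) - INR (S k) * sin x ^ 4 * sin x ^ 2 * cos x ^ k))).
    { auto_derive; [easy|]. change (match k with 0%nat => 1 | S _ => INR k + 1 end) with (INR (S k)). simpl pred. rewrite !S_INR, <- !tech_pow_Rmult. ring. }
    apply (is_derive_eq _ _ _ _ H). rewrite sin_sq. simpl pred. rewrite !S_INR, <- !tech_pow_Rmult. ring.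
Qed.

Definition Iq n j : R := RInt (qf n j) 0 PI.

Lemma Iq_rec n k :
  (INR k * (INR k + 4) - INR n * (INR n + 4)) * Iq n k = INR k * (INR k - 1) * Iq n (pred (pred k)).
Proof.
  set (A := INR k * (INR k + 4) - INR n * (INR n + 4)).
  set (B := INR k * (INR k - 1)).
  set (h := fun x => Phi_ n x * cos x ^ k - Psi_ k x * Pj n (cos x)).
  set (df := fun x => A * qf n k x - B * qf n (pred (pred k)) x).
  assert (Hd : forall x, is_derive h x (df x)).
  { intro x. unfold h.
    eapply is_derive_eq.
    - apply (is_derive_minus (fun x => Phi_ n x * cos x ^ k) (fun x => Psi_ k x * Pj n (cos x))).
      + apply (is_derive_mult (Phi_ n) (fun x => cos x ^ k)).
        * apply D_Phi.
        * apply is_derive_pow. auto_derive; [easy|reflexivity].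
        * intros; apply Rmult_comm.
      + apply (is_derive_mult (Psi_ k) (fun x => Pj n (cos x))).
        * apply D_Psi.
        * apply D_f.
        * intros; apply Rmult_comm.
    - unfold minus, plus, opp, mult; simpl. unfold df, qf, A, B, Phi_, Psi_. ring. }
  assert (Hc : forall x, continuous df x).
  { intro x. apply (ex_derive_continuous (K:=R_AbsRing) (V:=R_NormedModule) df). unfold df.
    apply (ex_derive_minus (fun x => A * qf n k x) (fun x => B * qf n (pred (pred k)) x)).
    - apply (ex_derive_scal (qf n k) A x). apply ex_derive_qf.
    - apply (ex_derive_scal (qf n (pred (pred k))) B x). apply ex_derive_qf. }
  pose proof (is_RInt_derive (V:=R_CompleteNormedModule) h df 0 PI (fun x _ => Hd x) (fun x _ => Hc x)) as H1.
  assert (H2 : is_RInt df 0 PI (minus (scal A (Iq n k)) (scal B (Iq n (pred (pred k)))))).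
  { apply (is_RInt_minus (V:=R_NormedModule) (fun x => A * qf n k x) (fun x => B * qf n (pred (pred k)) x)).
    - apply (is_RInt_scal (V:=R_NormedModule) (qf n k)). apply (RInt_correct (V:=R_CompleteNormedModule)), ex_RInt_qf.
    - apply (is_RInt_scal (V:=R_NormedModule) (qf n (pred (pred k)))). apply (RInt_correct (V:=R_CompleteNormedModule)), ex_RInt_qf. }
  pose proof (is_RInt_unique _ _ _ _ H1) as E1.
  pose proof (is_RInt_unique _ _ _ _ H2) as E2.
  rewrite E1 in E2. unfold h, Phi_, Psi_ in E2. rewrite sin_PI, sin_0 in E2.
  unfold minus, plus, opp, scal, mult in E2; simpl in E2. unfold mult in E2; simpl in E2.
  lra.
Qed.

Lemma Iq_orth n : forall k, (k < n)%nat -> Iq n k = 0.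
Proof.
  intro k. induction k as [k IH] using (well_founded_induction Wf_nat.lt_wf). intro Hk.
  pose proof (Iq_rec n k) as E.
  assert (Hlt : INR k < INR n) by (apply lt_INR; exact Hk).
  assert (H0 : 0 <= INR k) by apply pos_INR.
  assert (HA : INR k * (INR k + 4) - INR n * (INR n + 4) <> 0) by nra.
  assert (HR : INR k * (INR k - 1) * Iq n (pred (pred k)) = 0).
  { destruct k as [|[|k']].
    - simpl. ring.
    - simpl. ring.
    - simpl pred. rewrite (IH k') by lia. ring. }
  rewrite HR in E. apply Rmult_integral in E. destruct E as [E|E]; [contradiction|exact E].
Qed.

Lemma ball_R (l eps y : R) : Rabs (y - l) < eps -> ball l eps y.
Proof. intro H. exact H. Qed.

Lemma L_inf (f : R -> R) l C : (forall t, 1 <= t -> Rabs (f t - l) <= C / t) ->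
  filterlim f (Rbar_locally p_infty) (locally l).
Proof.
  intro H. apply filterlim_locally. intro eps.
  exists (Rmax 1 (Rabs C / eps + 1)). intros t Ht.
  apply ball_R.
  assert (H1 : 1 < t) by (eapply Rle_lt_trans; [apply Rmax_l|exact Ht]).
  assert (H2 : Rabs C / eps + 1 < t) by (eapply Rle_lt_trans; [apply Rmax_r|exact Ht]).
  eapply Rle_lt_trans; [apply H; lra|].
  pose proof (cond_pos eps) as He.
  apply (Rle_lt_trans _ (Rabs C / t)).
  - unfold Rdiv. apply Rmult_le_compat_r; [left; apply Rinv_0_lt_compat; lra|apply RRle_abs].
  - apply (Rmult_lt_reg_r t); [lra|]. unfold Rdiv. rewrite Rmult_assoc, Rinv_l by lra.
    assert (Rabs C / eps * eps = Rabs C) by (field; lra).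
    assert (0 <= Rabs C) by apply Rabs_pos.
    assert (Rabs C < eps * t); [|lra].
    apply (Rlt_le_trans _ (eps * (Rabs C / eps + 1))); [|apply Rmult_le_compat_l; lra].
    assert (eps * (Rabs C / eps + 1) = Rabs C + eps) by (field; lra). lra.
Qed.

Lemma L_0 (f : R -> R) l C : 0 <= C -> (forall t, 0 < t <= 1 -> Rabs (f t - l) <= C * t) ->
  filterlim f (at_right 0) (locally l).
Proof.
  intros HC H. apply filterlim_locally. intro eps.
  pose proof (cond_pos eps) as He.
  exists (mkposreal (Rmin 1 (eps / (C + 1))) ltac:(apply Rmin_pos; [lra|apply Rdiv_lt_0_compat; lra])).
  intros t Ht Hpos. apply ball_R. simpl in Ht.
  unfold ball in Ht; simpl in Ht; unfold AbsRing_ball, abs, minus, plus, opp in Ht; simpl in Ht.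
  rewrite Ropp_0, Rplus_0_r, Rabs_right in Ht by lra.
  assert (Ht1 : t < 1) by (eapply Rlt_le_trans; [exact Ht|apply Rmin_l]).
  assert (Ht2 : t < eps / (C + 1)) by (eapply Rlt_le_trans; [exact Ht|apply Rmin_r]).
  eapply Rle_lt_trans; [apply H; lra|].
  apply (Rle_lt_trans _ ((C + 1) * t)); [nra|].
  apply (Rmult_lt_reg_l (/ (C + 1))); [apply Rinv_0_lt_compat; lra|].
  rewrite <- Rmult_assoc, Rinv_l by lra. unfold Rdiv in Ht2. lra.
Qed.

Lemma D_Rpow t y : 0 < t -> is_derive (fun u => Rpower u y) t (y * Rpower t (y - 1)).
Proof. intro Ht. apply is_derive_Reals. apply derivable_pt_lim_power. exact Ht. Qed.

Lemma Rpower_pos t y : 0 < Rpower t y.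
Proof. unfold Rpower. apply exp_pos. Qed.

Definition HG (x t : R) := - Rpower t x * exp (- t).
Definition dHG (x t : R) := - x * Rpower t (x - 1) * exp (- t) + Rpower t x * exp (- t).

Lemma D_HG x t : 0 < t -> is_derive (HG x) t (dHG x t).
Proof.
  intro Ht. unfold HG, dHG.
  eapply is_derive_eq.
  - apply (is_derive_mult (fun t => - Rpower t x) (fun t => exp (- t))).
    + apply (is_derive_opp (fun t => Rpower t x)). apply D_Rpow, Ht.
    + auto_derive; [easy|reflexivity].
    + intros; apply Rmult_comm.
  - unfold plus, mult, opp; simpl. ring.
Qed.

Lemma locally_pos t : 0 < t -> locally t (fun y => 0 < y).
Proof.
  intro Ht. exists (mkposreal t Ht). intros y Hy.
  unfold ball in Hy; simpl in Hy; unfold AbsRing_ball, abs, minus, plus, opp in Hy; simpl in Hy.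
  apply Rabs_lt_between in Hy. lra.
Qed.

Lemma cont_dHG x t : 0 < t -> continuous (Derive (HG x)) t.
Proof.
  intro Ht.
  apply (continuous_ext_loc (Derive (HG x)) (dHG x)).
  - apply (filter_imp (fun y => 0 < y)); [|apply locally_pos, Ht].
    intros y Hy. symmetry. apply is_derive_unique. apply D_HG, Hy.
  - apply (ex_derive_continuous (K:=R_AbsRing) (V:=R_NormedModule) (dHG x)). unfold dHG.
    apply (ex_derive_plus (fun t => - x * Rpower t (x - 1) * exp (- t)) (fun t => Rpower t x * exp (- t))).
    + apply (ex_derive_mult (fun t => - x * Rpower t (x - 1)) (fun t => exp (- t))).
      * apply (ex_derive_scal (fun t => Rpower t (x - 1))). eexists; apply D_Rpow, Ht.
      * apply ex_derive_Reals_1. reg.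
    + apply (ex_derive_mult (fun t => Rpower t x) (fun t => exp (- t))).
      * eexists; apply D_Rpow, Ht.
      * apply ex_derive_Reals_1. reg.
Qed.

Lemma exp_nat k y : exp (INR k * y) = exp y ^ k.
Proof.
  induction k as [|k IH].
  - simpl. rewrite Rmult_0_l, exp_0. reflexivity.
  - rewrite S_INR, Rmult_plus_distr_r, Rmult_1_l, exp_plus, IH. simpl. ring.
Qed.

Lemma exp_ge_pow k t : (0 < k)%nat -> 0 <= t -> (t / INR k) ^ k <= exp t.
Proof.
  intros Hk Ht.
  assert (HK : 0 < INR k) by (apply lt_0_INR; exact Hk).
  replace (exp t) with (exp (t / INR k) ^ k) by (rewrite <- exp_nat; f_equal; field; lra).
  apply pow_incr. split.
  - apply Rdiv_le_0_compat; lra.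
  - pose proof (exp_ineq1_le (t / INR k)). lra.
Qed.

Lemma exp_le x y : x <= y -> exp x <= exp y.
Proof. intros [H|H]; [left; apply exp_increasing, H|subst; lra]. Qed.

Lemma ln_le0 t : 0 < t <= 1 -> ln t <= 0.
Proof. intros [H1 [H2|H2]]; [left; rewrite <- ln_1; apply ln_increasing; lra|subst; rewrite ln_1; lra]. Qed.

Lemma Rpower_le1 t y : 0 < t <= 1 -> 0 <= y -> Rpower t y <= 1.
Proof.
  intros Ht Hy. unfold Rpower. rewrite <- exp_0. apply exp_le.
  pose proof (ln_le0 t Ht). nra.
Qed.

Lemma HG_0 x : 1 <= x -> filterlim (HG x) (at_right 0) (locally 0).
Proof.
  intro Hx. apply (L_0 _ _ 1); [lra|]. intros t [Ht0 Ht1].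
  unfold HG. rewrite Rminus_0_r, Rabs_left1.
  2:{ pose proof (Rpower_pos t x). pose proof (exp_pos (- t)). nra. }
  replace (Rpower t x) with (Rpower t 1 * Rpower t (x - 1)) by (rewrite <- Rpower_plus; f_equal; ring).
  rewrite Rpower_1 by lra.
  pose proof (Rpower_le1 t (x - 1) (conj Ht0 Ht1) ltac:(lra)) as E1.
  pose proof (Rpower_pos t (x - 1)).
  assert (E2 : exp (- t) <= 1) by (rewrite <- exp_0; apply exp_le; lra).
  pose proof (exp_pos (- t)).
  assert (Rpower t (x - 1) * exp (- t) <= 1) by nra. nra.
Qed.

Lemma HG_inf x (m : nat) : 1 <= x -> x <= INR m -> filterlim (HG x) (Rbar_locally p_infty) (locally 0).
Proof.
  intros Hx Hm. apply (L_inf _ _ (INR (S m) ^ (S m))). intros t Ht.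
  unfold HG. rewrite Rminus_0_r, Rabs_left1.
  2:{ pose proof (Rpower_pos t x). pose proof (exp_pos (- t)). nra. }
  assert (E1 : Rpower t x <= t ^ m).
  { rewrite <- Rpower_pow by lra. apply Rle_Rpower; lra. }
  pose proof (exp_ge_pow (S m) t ltac:(lia) ltac:(lra)) as E2.
  assert (HK : 0 < INR (S m)) by (apply lt_0_INR; lia).
  rewrite exp_Ropp.
  assert (Hp : 0 < (t / INR (S m)) ^ S m) by (apply pow_lt; apply Rdiv_lt_0_compat; lra).
  assert (Hp2 : 0 < t ^ m) by (apply pow_lt; lra).
  pose proof (exp_pos t).
  apply (Rle_trans _ (t ^ m / (t / INR (S m)) ^ S m)).
  - rewrite Ropp_mult_distr_l, Ropp_involutive. unfold Rdiv.
    apply Rmult_le_compat; try lra.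
    + left; apply Rpower_pos.
    + left; apply Rinv_0_lt_compat, exp_pos.
    + apply Rinv_le_contravar; lra.
  - right. unfold Rdiv. rewrite Rpow_mult_distr, pow_inv.
    replace (t ^ S m) with (t * t ^ m) by (simpl; ring).
    assert (INR (S m) ^ S m <> 0) by (apply pow_nonzero; lra).
    field. repeat split; lra.
Qed.

Lemma fp_pos : filter_prod (at_right 0) (Rbar_locally p_infty) (fun ab => 0 < fst ab /\ 0 < snd ab).
Proof.
  apply (Filter_prod _ _ _ (fun a => 0 < a) (fun b => 0 < b)).
  - exists (mkposreal 1 Rlt_0_1). intros y _ Hy. exact Hy.
  - exists 0. intros y Hy. exact Hy.
  - intros a b Ha Hb. simpl. split; assumption.
Qed.

Lemma is_RInt_gen_eqv (f : R -> R) F G (l l' : R) : is_RInt_gen f F G l -> l = l' -> is_RInt_gen f F G l'.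
Proof. intros H <-; exact H. Qed.

Lemma Gamma_step x (m : nat) l : 1 <= x -> x <= INR m ->
  is_RInt_gen (fun t => Rpower t (x - 1) * exp (- t)) (at_right 0) (Rbar_locally p_infty) l ->
  is_RInt_gen (fun t => Rpower t (x + 1 - 1) * exp (- t)) (at_right 0) (Rbar_locally p_infty) (x * l).
Proof.
  intros Hx Hm HL.
  assert (HD : is_RInt_gen (Derive (HG x)) (at_right 0) (Rbar_locally p_infty) (0 - 0)).
  { apply is_RInt_gen_Derive.
    - apply (filter_imp _ _ (fun ab H t Ht => ex_intro _ _ (D_HG x t (Rlt_le_trans _ _ _ (Rmin_glb_lt _ _ _ (proj1 H) (proj2 H)) (proj1 Ht))))) , fp_pos.
    - apply (filter_imp _ _ (fun ab H t Ht => cont_dHG x t (Rlt_le_trans _ _ _ (Rmin_glb_lt _ _ _ (proj1 H) (proj2 H)) (proj1 Ht)))), fp_pos.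
    - apply HG_0, Hx.
    - apply (HG_inf x m); assumption. }
  pose proof (is_RInt_gen_scal _ x _ HL) as HS.
  pose proof (is_RInt_gen_plus _ _ _ _ HD HS) as HP.
  eapply is_RInt_gen_eqv.
  - eapply is_RInt_gen_ext; [|exact HP].
    apply (filter_imp (fun ab => 0 < fst ab /\ 0 < snd ab)); [|apply fp_pos].
    intros [a b] [Ha Hb] t Ht. simpl in *.
    assert (Htp : 0 < t) by (eapply Rlt_trans; [apply (Rmin_glb_lt _ _ _ Ha Hb)|exact (proj1 Ht)]).
    rewrite (is_derive_unique _ _ _ (D_HG x t Htp)). unfold dHG, plus, scal; simpl; unfold mult; simpl.
    replace (x + 1 - 1) with x by ring. ring.
  - unfold plus, scal; simpl; unfold mult; simpl. ring.
Qed.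

Lemma Gamma1_is : is_RInt_gen (fun t => Rpower t (1 - 1) * exp (- t)) (at_right 0) (Rbar_locally p_infty) 1.
Proof.
  set (H1 := fun t => - exp (- t)).
  assert (HD : is_RInt_gen (Derive H1) (at_right 0) (Rbar_locally p_infty) (0 - (-1))).
  { apply is_RInt_gen_Derive.
    - apply filter_forall. intros ab t _. unfold H1. apply ex_derive_Reals_1. reg.
    - apply filter_forall. intros ab t _.
      apply (continuous_ext_loc (Derive H1) (fun t => exp (- t))).
      + apply filter_forall. intro y. symmetry. apply is_derive_unique. unfold H1.
        auto_derive; [easy|ring].
      + apply (ex_derive_continuous (K:=R_AbsRing) (V:=R_NormedModule)). apply ex_derive_Reals_1. reg.
    - apply (L_0 _ _ 1); [lra|]. intros t [Ht0 Ht1]. unfold H1.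
      pose proof (exp_ineq1_le (- t)).
      assert (exp (- t) <= 1) by (rewrite <- exp_0; apply exp_le; lra).
      rewrite Rabs_right by lra. lra.
    - apply (L_inf _ _ 1). intros t Ht. unfold H1.
      rewrite Rminus_0_r, Rabs_Ropp, Rabs_right by (left; apply exp_pos).
      rewrite exp_Ropp. pose proof (exp_ineq1_le t). pose proof (exp_pos t).
      unfold Rdiv. rewrite Rmult_1_l. apply Rinv_le_contravar; lra. }
  eapply is_RInt_gen_eqv.
  - eapply is_RInt_gen_ext; [|exact HD].
    apply (filter_imp (fun ab => 0 < fst ab /\ 0 < snd ab)); [|apply fp_pos].
    intros [a b] [Ha Hb] t Ht. simpl in *.
    assert (Htp : 0 < t) by (eapply Rlt_trans; [apply (Rmin_glb_lt _ _ _ Ha Hb)|exact (proj1 Ht)]).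
    rewrite (is_derive_unique H1 t (exp (- t))).
    + replace (1 - 1) with 0 by ring. rewrite Rpower_O by lra. ring.
    + unfold H1. auto_derive; [easy|ring].
  - ring.
Qed.

Lemma Gamma_nat_is n : is_RInt_gen (fun t => Rpower t (1 + INR n - 1) * exp (- t)) (at_right 0) (Rbar_locally p_infty) (INR (Factorial.fact n)).
Proof.
  induction n as [|n IH].
  - simpl INR. rewrite Rplus_0_r. exact Gamma1_is.
  - pose proof (Gamma_step (1 + INR n) (S n) _ ltac:(pose proof (pos_INR n); lra) ltac:(rewrite S_INR; lra) IH) as H.
    rewrite S_INR. replace (1 + (INR n + 1)) with (1 + INR n + 1) by ring.
    eapply is_RInt_gen_eqv; [exact H|].
    change (Factorial.fact (S n)) with (S n * Factorial.fact n)%nat. rewrite mult_INR, S_INR. ring.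
Qed.

Lemma Gamma_nat n : Gamma (1 + INR n) = INR (Factorial.fact n).
Proof. unfold Gamma. apply is_RInt_gen_unique. apply Gamma_nat_is. Qed.

Lemma ex_RInt_pos (f : R -> R) a b : (forall t, 0 < t -> continuous f t) -> 0 < a -> 0 < b -> ex_RInt f a b.
Proof.
  intros Hc Ha Hb. apply (ex_RInt_continuous (V:=R_CompleteNormedModule)). intros z Hz.
  apply Hc. eapply Rlt_le_trans; [apply (Rmin_glb_lt _ _ _ Ha Hb)|exact (proj1 Hz)].
Qed.

Lemma improper_exists (f : R -> R) (M : R) :
  (forall t, 0 < t -> continuous f t) ->
  (forall t, 0 < t -> 0 <= f t) ->
  (forall a b, 0 < a <= 1/10 -> 1 <= b -> RInt f a b <= M) ->
  exists l, is_RInt_gen f (at_right 0) (Rbar_locally p_infty) l /\ l <= M /\ RInt f (1/10) 1 <= l.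
Proof.
  intros Hc Hp HM.
  set (E := fun r => exists a b, (0 < a <= 1/10 /\ 1 <= b) /\ r = RInt f a b).
  assert (HE1 : bound E) by (exists M; intros r [a [b [Hab ->]]]; apply HM; tauto).
  assert (HE2 : exists r, E r) by (exists (RInt f (1/10) 1); exists (1/10), 1; split; [lra|reflexivity]).
  destruct (completeness E HE1 HE2) as [l [Hub Hlub]].
  exists l. split; [|split].
  - intros P [eps HP].
    assert (Hex : exists a0 b0, (0 < a0 <= 1/10 /\ 1 <= b0) /\ l - eps < RInt f a0 b0).
    { apply Classical_Prop.NNPP. intro Hn.
      assert (Hb : is_upper_bound E (l - eps)).
      { intros r [a [b [Hab ->]]]. apply Rnot_lt_le. intro Hlt. apply Hn. exists a, b. split; assumption. }
      pose proof (Hlub _ Hb). pose proof (cond_pos eps). lra. }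
    destruct Hex as [a0 [b0 [[Ha0 Hb0] Hr]]].
    apply (Filter_prod _ _ _ (fun a => 0 < a < a0) (fun b => b0 < b)).
    + exists (mkposreal a0 (proj1 Ha0)). intros y Hy Hy0.
      unfold ball in Hy; simpl in Hy; unfold AbsRing_ball, abs, minus, plus, opp in Hy; simpl in Hy.
      apply Rabs_lt_between in Hy. lra.
    + exists b0. intros y Hy. exact Hy.
    + intros a b Ha Hb. simpl. exists (RInt f a b). split.
      * apply (RInt_correct (V:=R_CompleteNormedModule)). apply ex_RInt_pos; auto; lra.
      * apply HP. apply ball_R.
        assert (Hle : RInt f a b <= l) by (apply Hub; exists a, b; split; [lra|reflexivity]).
        assert (Hge : RInt f a0 b0 <= RInt f a b).
        { rewrite <- (RInt_Chasles (V:=R_CompleteNormedModule) f a a0 b) by (apply ex_RInt_pos; auto; lra).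
          rewrite <- (RInt_Chasles (V:=R_CompleteNormedModule) f a0 b0 b) by (apply ex_RInt_pos; auto; lra).
          unfold plus; simpl.
          assert (0 <= RInt f a a0) by (apply RInt_ge_0; [lra|apply ex_RInt_pos; auto; lra|intros; apply Hp; lra]).
          assert (0 <= RInt f b0 b) by (apply RInt_ge_0; [lra|apply ex_RInt_pos; auto; lra|intros; apply Hp; lra]).
          lra. }
        rewrite Rabs_left1 by lra. lra.
  - apply Hlub. intros r [a [b [Hab ->]]]. apply HM; tauto.
  - apply Hub. exists (1/10), 1. split; [lra|reflexivity].
Qed.

Definition f52 (t : R) := Rpower t (5/2 - 1) * exp (- t).

Lemma cont_f52 t : 0 < t -> continuous f52 t.
Proof.
  intro Ht. apply (ex_derive_continuous (K:=R_AbsRing) (V:=R_NormedModule)). unfold f52.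
  apply (ex_derive_mult (fun t => Rpower t (5/2 - 1)) (fun t => exp (- t))).
  - eexists; apply D_Rpow, Ht.
  - apply ex_derive_Reals_1. reg.
Qed.

Lemma f52_le t : 0 < t -> f52 t <= (t + t ^ 2) / 2 * exp (- t).
Proof.
  intro Ht. unfold f52.
  replace (5/2 - 1) with (1 + / 2) by field.
  rewrite Rpower_plus, Rpower_1, Rpower_sqrt by lra.
  pose proof (exp_pos (- t)).
  apply Rmult_le_compat_r; [lra|].
  pose proof (sqrt_sqrt t ltac:(lra)). pose proof (sqrt_pos t).
  assert (0 <= t * (sqrt t - 1) ^ 2) by (apply Rmult_le_pos; [lra|apply pow2_ge_0]).
  nra.
Qed.

Lemma Gamma52_props : exists G, is_RInt_gen f52 (at_right 0) (Rbar_locally p_infty) G /\ 0 < G <= 83/50.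
Proof.
  destruct (improper_exists f52 (83/50)) as [l [H1 [H2 H3]]].
  - apply cont_f52.
  - intros t Ht. unfold f52. pose proof (Rpower_pos t (5/2-1)). pose proof (exp_pos (- t)). nra.
  - intros a b Ha Hb.
    set (F := fun t => - (t ^ 2 + 3 * t + 3) / 2 * exp (- t)).
    assert (HI : is_RInt (fun t => (t + t ^ 2) / 2 * exp (- t)) a b (minus (F b) (F a))).
    { apply (is_RInt_derive (V:=R_CompleteNormedModule) F).
      - intros x _. eapply is_derive_eq; [unfold F; auto_derive; [easy|reflexivity]|]. field.
      - intros x _. apply (ex_derive_continuous (K:=R_AbsRing) (V:=R_NormedModule)). apply ex_derive_Reals_1. reg. }
    apply (Rle_trans _ (minus (F b) (F a))).
    + rewrite <- (is_RInt_unique _ _ _ _ HI). apply RInt_le; [lra| | |].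
      * apply ex_RInt_pos; [apply cont_f52|lra|lra].
      * eexists; exact HI.
      * intros x Hx. apply f52_le. lra.
    + unfold minus, plus, opp, F; simpl.
      pose proof (exp_pos (- b)). pose proof (exp_pos (- a)).
      assert (exp (- a) <= 1) by (rewrite <- exp_0; apply exp_le; lra).
      assert (0 <= (b ^ 2 + 3 * b + 3) / 2 * exp (- b)) by (apply Rmult_le_pos; [nra|lra]).
      assert ((a ^ 2 + 3 * a + 3) / 2 * exp (- a) <= (a ^ 2 + 3 * a + 3) / 2) by (assert (0 <= a^2+3*a+3) by nra; nra).
      assert ((a ^ 2 + 3 * a + 3) / 2 <= 83/50) by nra.
      lra.
  - exists l. split; [exact H1|split; [|exact H2]].
    eapply Rlt_le_trans; [|exact H3].
    apply RInt_gt_0; [lra| |].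
    + intros x Hx. unfold f52. pose proof (Rpower_pos x (5/2-1)). pose proof (exp_pos (- x)). nra.
    + intros x Hx. apply cont_f52. lra.
Qed.

Lemma Gamma52_is : is_RInt_gen f52 (at_right 0) (Rbar_locally p_infty) (Gamma (5/2)) /\ 0 < Gamma (5/2) <= 83/50.
Proof.
  destruct Gamma52_props as [G [H1 H2]].
  assert (E : Gamma (5/2) = G) by (unfold Gamma; apply is_RInt_gen_unique; exact H1).
  rewrite E. split; assumption.
Qed.

Fixpoint hR (n : nat) : R := match n with O => 1 | S n' => (5/2 + INR n') * hR n' end.

Lemma hR_pos n : 0 < hR n.
Proof. induction n as [|n IH]; simpl; [lra|]. pose proof (pos_INR n). nra. Qed.

Lemma Gamma_half_is n : is_RInt_gen (fun t => Rpower t (5/2 + INR n - 1) * exp (- t)) (at_right 0) (Rbar_locally p_infty) (Gamma (5/2) * hR n).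
Proof.
  induction n as [|n IH].
  - simpl. rewrite Rplus_0_r, Rmult_1_r. exact (proj1 Gamma52_is).
  - pose proof (Gamma_step (5/2 + INR n) (S (S (S n))) _ ltac:(pose proof (pos_INR n); lra) ltac:(rewrite !S_INR; lra) IH) as H.
    rewrite S_INR. replace (5/2 + (INR n + 1)) with (5/2 + INR n + 1) by ring.
    eapply is_RInt_gen_eqv; [exact H|]. simpl. ring.
Qed.

Lemma Gamma_half n : Gamma (5/2 + INR n) = Gamma (5/2) * hR n.
Proof. unfold Gamma. apply is_RInt_gen_unique. apply Gamma_half_is. Qed.

Lemma Gamma4 n : Gamma (4 + INR n) = INR (Factorial.fact (n + 3)).
Proof.
  rewrite <- Gamma_nat. f_equal. rewrite plus_INR. simpl. ring.
Qed.

Lemma Nfrak_sq n : Nfrak n ^ 2 =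
  (INR n + 2) * INR (Factorial.fact n) * INR (Factorial.fact (n + 3)) / (8 * Gamma (5/2) ^ 2 * hR n ^ 2).
Proof.
  unfold Nfrak, omega.
  rewrite (Rplus_comm 1 (INR n)) , <- (Rplus_comm 1 (INR n)), Gamma_nat, Gamma4, Gamma_half.
  pose proof (proj1 (proj2 Gamma52_is)). pose proof (hR_pos n).
  assert (0 < INR (Factorial.fact n)) by (apply lt_0_INR, Factorial.lt_O_fact).
  assert (0 < INR (Factorial.fact (n + 3))) by (apply lt_0_INR, Factorial.lt_O_fact).
  pose proof (pos_INR n).
  unfold Rdiv. rewrite Rpow_mult_distr, pow_inv.
  replace (sqrt ((INR n + 2) * INR (Factorial.fact n) * INR (Factorial.fact (n + 3))) ^ 2)
    with ((INR n + 2) * INR (Factorial.fact n) * INR (Factorial.fact (n + 3))).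
  2:{ simpl. rewrite Rmult_1_r, sqrt_sqrt; [reflexivity|]. apply Rmult_le_pos; [apply Rmult_le_pos|]; lra. }
  replace ((2 * sqrt 2 * (Gamma (5 / 2) * hR n)) ^ 2) with (4 * (sqrt 2 * sqrt 2) * Gamma (5/2) ^ 2 * hR n ^ 2) by ring.
  replace ((2 * sqrt 2 * (Gamma (5 * / 2) * hR n)) ^ 2) with (4 * (sqrt 2 * sqrt 2) * Gamma (5 * / 2) ^ 2 * hR n ^ 2) by ring.
  rewrite sqrt_sqrt by lra. field. lra.
Qed.

Lemma Nfrak_pos n : 0 < Nfrak n.
Proof.
  unfold Nfrak, omega.
  rewrite (Rplus_comm 1 (INR n)) , <- (Rplus_comm 1 (INR n)), Gamma_nat, Gamma4, Gamma_half.
  pose proof (proj1 (proj2 Gamma52_is)). pose proof (hR_pos n).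
  assert (0 < INR (Factorial.fact n)) by (apply lt_0_INR, Factorial.lt_O_fact).
  assert (0 < INR (Factorial.fact (n + 3))) by (apply lt_0_INR, Factorial.lt_O_fact).
  pose proof (pos_INR n).
  apply Rdiv_lt_0_compat.
  - apply sqrt_lt_R0. apply Rmult_lt_0_compat; [apply Rmult_lt_0_compat|]; lra.
  - assert (0 < sqrt 2) by (apply sqrt_lt_R0; lra). apply Rmult_lt_0_compat; [lra|]. apply Rmult_lt_0_compat; lra.
Qed.

Lemma is_RInt_eqv (f : R -> R) a b (l l' : R) : is_RInt f a b l -> l = l' -> is_RInt f a b l'.
Proof. intros H <-; exact H. Qed.

Lemma is_RInt_cos (z : Z) : is_RInt (fun t => cos (IZR z * t)) 0 (2 * PI) (if Z.eq_dec z 0 then 2 * PI else 0).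
Proof.
  destruct (Z.eq_dec z 0) as [->|Hz].
  - pose proof (is_RInt_const (V:=R_NormedModule) 0 (2 * PI) 1) as H.
    eapply is_RInt_eqv.
    + eapply is_RInt_ext; [|exact H].
      intros x _. simpl. rewrite Rmult_0_l, cos_0. reflexivity.
    + unfold scal; simpl; unfold mult; simpl. ring.
  - assert (Hc : IZR z <> 0) by (apply not_0_IZR; exact Hz).
    set (F := fun t => sin (IZR z * t) / IZR z).
    assert (H := is_RInt_derive (V:=R_CompleteNormedModule) F (fun t => cos (IZR z * t)) 0 (2 * PI)).
    eapply is_RInt_eqv.
    + apply H.
      * intros x _. eapply is_derive_eq; [unfold F; auto_derive; [easy|reflexivity]|]. field. exact Hc.
      * intros x _. apply (ex_derive_continuous (K:=R_AbsRing) (V:=R_NormedModule)). apply ex_derive_Reals_1. reg.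
    + unfold minus, plus, opp, F; simpl. rewrite Rmult_0_r, sin_0.
      rewrite (sin_eq_0_1 (IZR z * (2 * PI))). field. exact Hc.
      exists (2 * z)%Z. rewrite mult_IZR. simpl. ring.
Qed.

Lemma cos3 a : cos (3 * a) = 4 * cos a ^ 3 - 3 * cos a.
Proof.
  replace (3 * a) with (2 * a + a) by ring.
  rewrite cos_plus, cos_2a_cos, sin_2a.
  assert (Hs : sin a ^ 2 = 1 - cos a ^ 2) by apply sin_sq.
  transitivity ((2 * cos a * cos a - 1) * cos a - 2 * sin a ^ 2 * cos a); [ring|].
  rewrite Hs. ring.
Qed.

Lemma trig_id a b : cos a ^ 3 * cos b = (3 * cos (a - b) + 3 * cos (a + b) + cos (3 * a - b) + cos (3 * a + b)) / 8.
Proof.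
  rewrite !cos_minus, !cos_plus, cos3.
  field.
Qed.

Lemma trig_pt g m t : cos (omega g * t) ^ 3 * cos (omega m * t) =
  / 8 * (3 * cos (IZR (Z.of_nat g - Z.of_nat m) * t) + 3 * cos (IZR (Z.of_nat g + Z.of_nat m + 4) * t)
   + cos (IZR (3 * Z.of_nat g + 4 - Z.of_nat m) * t) + cos (IZR (3 * Z.of_nat g + Z.of_nat m + 8) * t)).
Proof.
    rewrite trig_id. unfold omega.
    rewrite ?minus_IZR, ?plus_IZR, ?mult_IZR, <- !INR_IZR_INZ.
    replace ((INR g + 2) * t - (INR m + 2) * t) with ((INR g - INR m) * t) by ring.
    replace ((INR g + 2) * t + (INR m + 2) * t) with ((INR g + INR m + 4) * t) by ring.
    replace (3 * ((INR g + 2) * t) - (INR m + 2) * t) with ((3 * INR g + 4 - INR m) * t) by ring.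
    replace (3 * ((INR g + 2) * t) + (INR m + 2) * t) with ((3 * INR g + INR m + 8) * t) by ring.
    field.
Qed.

Ltac fixeq := match goal with |- @eq _ ?a ?b => change (@eq R a b) end.

Definition Jz (z : Z) : R := if Z.eq_dec z 0 then 2 * PI else 0.

Lemma trig_int g m : RInt (fun t => cos (omega g * t) ^ 3 * cos (omega m * t)) 0 (2 * PI) =
  (3 * Jz (Z.of_nat g - Z.of_nat m) + 3 * Jz (Z.of_nat g + Z.of_nat m + 4)
   + Jz (3 * Z.of_nat g + 4 - Z.of_nat m) + Jz (3 * Z.of_nat g + Z.of_nat m + 8)) / 8.
Proof.
  set (z1 := (Z.of_nat g - Z.of_nat m)%Z). set (z2 := (Z.of_nat g + Z.of_nat m + 4)%Z).
  set (z3 := (3 * Z.of_nat g + 4 - Z.of_nat m)%Z). set (z4 := (3 * Z.of_nat g + Z.of_nat m + 8)%Z).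
  apply is_RInt_unique.
  assert (H := is_RInt_scal (V:=R_NormedModule) _ 0 (2 * PI) (/ 8) _
     (is_RInt_plus (V:=R_NormedModule) _ _ 0 (2 * PI) _ _
       (is_RInt_plus (V:=R_NormedModule) _ _ 0 (2 * PI) _ _
         (is_RInt_plus (V:=R_NormedModule) _ _ 0 (2 * PI) _ _
            (is_RInt_scal (V:=R_NormedModule) _ 0 (2 * PI) 3 _ (is_RInt_cos z1))
            (is_RInt_scal (V:=R_NormedModule) _ 0 (2 * PI) 3 _ (is_RInt_cos z2)))
         (is_RInt_cos z3))
       (is_RInt_cos z4))).
  eapply is_RInt_eqv.
  - eapply is_RInt_ext; [|exact H].
    intros t _. symmetry. apply trig_pt.
  - unfold Jz. change (/ 8 * (3 * (if Z.eq_dec z1 0 then 2 * PI else 0) + 3 * (if Z.eq_dec z2 0 then 2 * PI else 0) + (if Z.eq_dec z3 0 then 2 * PI else 0) + (if Z.eq_dec z4 0 then 2 * PI else 0)) = (3 * (if Z.eq_dec z1 0 then 2 * PI else 0) + 3 * (if Z.eq_dec z2 0 then 2 * PI else 0) + (if Z.eq_dec z3 0 then 2 * PI else 0) + (if Z.eq_dec z4 0 then 2 * PI else 0)) / 8). field.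
Qed.

Lemma Jz_nz z : z <> 0%Z -> Jz z = 0.
Proof. intro H. unfold Jz. destruct (Z.eq_dec z 0); [contradiction|reflexivity]. Qed.

Lemma trig_int_eq g : RInt (fun t => cos (omega g * t) ^ 3 * cos (omega g * t)) 0 (2 * PI) = 3 * PI / 4.
Proof.
  rewrite trig_int. rewrite (Jz_nz (Z.of_nat g + Z.of_nat g + 4)), (Jz_nz (3 * Z.of_nat g + 4 - Z.of_nat g)),
    (Jz_nz (3 * Z.of_nat g + Z.of_nat g + 8)) by lia.
  replace (Z.of_nat g - Z.of_nat g)%Z with 0%Z by lia. unfold Jz. simpl. fixeq. field.
Qed.

Lemma trig_int_ne g m : m <> g -> m <> (3 * g + 4)%nat ->
  RInt (fun t => cos (omega g * t) ^ 3 * cos (omega m * t)) 0 (2 * PI) = 0.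
Proof.
  intros H1 H2.
  rewrite trig_int, !Jz_nz by lia. fixeq. field.
Qed.

Lemma sum_n_zero (a : nat -> R) n : (forall k, (k <= n)%nat -> a k = 0) -> sum_n a n = 0.
Proof.
  induction n as [|n IH]; intro H.
  - rewrite sum_O. apply H. lia.
  - rewrite sum_Sn, IH by (intros; apply H; lia). rewrite H by lia. unfold plus; simpl. ring.
Qed.

Lemma Series_fin (a : nat -> R) N : (forall k, (N < k)%nat -> a k = 0) -> Series a = sum_n a N.
Proof.
  intro H. apply is_series_unique. unfold is_series.
  apply (filterlim_ext_loc (fun _ => sum_n a N)).
  - exists N. intros n Hn. induction n as [|n IH].
    + replace N with O by lia. reflexivity.
    + destruct (Nat.eq_dec (S n) N) as [E|E]; [rewrite E; reflexivity|].
      rewrite sum_Sn, <- IH by lia. rewrite H by lia. unfold plus; simpl. symmetry; apply Rplus_0_r.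
  - apply filterlim_const.
Qed.

Lemma Series_single (a : nat -> R) g : (forall k, k <> g -> a k = 0) -> Series a = a g.
Proof.
  intro H. rewrite (Series_fin a g) by (intros; apply H; lia).
  destruct g as [|g].
  - apply sum_O.
  - rewrite sum_Sn, sum_n_zero by (intros; apply H; lia). unfold plus; simpl. ring.
Qed.

Lemma Series_zero : Series (fun _ => 0) = 0.
Proof. rewrite (Series_single _ O) by reflexivity. reflexivity. Qed.

Lemma Series2_single g (F : nat -> nat -> R) : (forall i j, (i <> g \/ j <> g) -> F i j = 0) ->
  Series (fun i => Series (fun j => F i j)) = F g g.
Proof.
  intro H.
  rewrite (Series_ext _ (fun i => F i g)).
  - apply (Series_single (fun i => F i g) g). intros; apply H; auto.
  - intro i. apply (Series_single (fun j => F i j) g). intros; apply H; auto.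
Qed.

Lemma collapse (Tm : nat -> nat -> nat -> nat -> R) (C : nat -> nat -> R) g N :
  (forall k nu i j, (i <> g \/ j <> g \/ k <> g) -> Tm k nu i j = 0) ->
  (forall nu, (N < nu)%nat -> C g nu * Tm g nu g g = 0) ->
  Series (fun k => Series (fun nu => C k nu * Series (fun i => Series (fun j => Tm k nu i j))))
  = sum_n (fun nu => C g nu * Tm g nu g g) N.
Proof.
  intros H1 H2.
  rewrite (Series_ext _ (fun k => Series (fun nu => C k nu * Tm k nu g g))).
  2:{ intro k. apply Series_ext. intro nu. f_equal. apply Series2_single. intros i j [Hi|Hj]; apply H1; auto. }
  rewrite (Series_single (fun k => Series (fun nu => C k nu * Tm k nu g g)) g).
  - apply Series_fin. exact H2.
  - intros k Hk. rewrite (Series_ext _ (fun _ => 0)); [apply Series_zero|].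
    intro nu. rewrite H1 by auto. ring.
Qed.

Lemma Series3_single g (F : nat -> nat -> nat -> R) : (forall i j k, (i <> g \/ j <> g \/ k <> g) -> F i j k = 0) ->
  Series (fun i => Series (fun j => Series (fun k => F i j k))) = F g g g.
Proof.
  intro H.
  rewrite (Series_ext _ (fun i => Series (fun j => F i j g))).
  - apply (Series2_single g (fun i j => F i j g)). intros i j [Hi|Hj]; apply H; auto.
  - intro i. apply Series_ext. intro j. apply (Series_single (fun k => F i j k) g). intros; apply H; auto.
Qed.

Lemma ind0_nz x : x <> 0 -> ind0 x = 0.
Proof. intro H. unfold ind0. destruct (Req_EM_T x 0); [contradiction|reflexivity]. Qed.

Lemma ind0_0 : ind0 0 = 1.
Proof. unfold ind0. destruct (Req_EM_T 0 0); [reflexivity|lra]. Qed.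

From Stdlib Require Import QArith Qreals List.
Open Scope R_scope.
Open Scope list_scope.

Arguments Qred : simpl never.
Arguments Q2R : simpl never.

Fixpoint evalQ (p : list Q) (y : R) : R :=
  match p with nil => 0 | c :: p' => Q2R c + y * evalQ p' y end.

Fixpoint padd (p q : list Q) : list Q :=
  match p, q with
  | nil, _ => q | _, nil => p
  | a :: p', b :: q' => Qred (a + b) :: padd p' q' end.
Definition pscal (c : Q) (p : list Q) := map (fun a => Qred (c * a)) p.
Fixpoint pmul (p q : list Q) : list Q :=
  match p with nil => nil | a :: p' => padd (pscal a q) (0%Q :: pmul p' q) end.
Fixpoint ppow (p : list Q) (n : nat) : list Q :=
  match n with O => (1%Q :: nil) | S n' => pmul p (ppow p n') end.
Fixpoint psum (F : nat -> list Q) (n : nat) : list Q :=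
  match n with O => F O | S n' => padd (psum F n') (F (S n')) end.

Lemma Q2R_Qred x : Q2R (Qred x) = Q2R x.
Proof. apply Qeq_eqR, Qred_correct. Qed.

Lemma evalQ_padd p q y : evalQ (padd p q) y = evalQ p y + evalQ q y.
Proof.
  revert q; induction p as [|a p IH]; intros [|b q]; simpl; try ring.
  all: rewrite IH, Q2R_Qred, Q2R_plus; ring.
Qed.

Lemma evalQ_pscal c p y : evalQ (pscal c p) y = Q2R c * evalQ p y.
Proof.
  induction p as [|a p IH]; simpl; [ring|].
  rewrite IH, Q2R_Qred, Q2R_mult; ring.
Qed.

Lemma evalQ_pmul p q y : evalQ (pmul p q) y = evalQ p y * evalQ q y.
Proof.
  induction p as [|a p IH]; simpl; [ring|].
  rewrite evalQ_padd, evalQ_pscal; simpl; rewrite IH, RMicromega.Q2R_0; ring.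
Qed.

Lemma evalQ_ppow p n y : evalQ (ppow p n) y = (evalQ p y) ^ n.
Proof.
  induction n as [|n IH]; simpl.
  - rewrite RMicromega.Q2R_1; ring.
  - rewrite evalQ_pmul, IH; ring.
Qed.

Lemma evalQ_psum F n y : evalQ (psum F n) y = sum_n (fun s => evalQ (F s) y) n.
Proof.
  induction n as [|n IH]; simpl.
  - rewrite sum_O; reflexivity.
  - rewrite sum_Sn, evalQ_padd, IH; reflexivity.
Qed.

Fixpoint fallingQ (r : Q) (k : nat) : Q :=
  match k with O => 1%Q | S k' => (fallingQ r k' * (r - inject_Z (Z.of_nat k')))%Q end.
Definition gbQ (r : Q) (k : nat) : Q :=
  (fallingQ r k / inject_Z (Z.of_nat (Factorial.fact k)))%Q.

Lemma Q2R_inject n : Q2R (inject_Z (Z.of_nat n)) = INR n.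
Proof. unfold Q2R; simpl. rewrite INR_IZR_INZ. field. Qed.

Lemma Q2R_falling r k : Q2R (fallingQ r k) = falling (Q2R r) k.
Proof.
  induction k as [|k IH]; simpl.
  - apply RMicromega.Q2R_1.
  - rewrite Q2R_mult, Q2R_minus, IH, Q2R_inject; reflexivity.
Qed.

Lemma Q2R_gb r k : Q2R (gbQ r k) = gen_binom (Q2R r) k.
Proof.
  unfold gbQ, gen_binom. rewrite Q2R_div.
  - rewrite Q2R_falling, Q2R_inject; reflexivity.
  - intro H. apply Qeq_eqR in H. rewrite Q2R_inject, RMicromega.Q2R_0 in H.
    apply (INR_eq _ 0) in H. pose proof (Factorial.lt_O_fact k). lia.
Qed.

Definition rnQ (n : nat) : Q := (inject_Z (Z.of_nat n) + (3#2))%Q.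
Definition jcQ (n : nat) : list Q :=
  psum (fun s => pscal (Qred (gbQ (rnQ n) (n - s) * gbQ (rnQ n) s))
                  (pmul (ppow ((-1#2)%Q :: (1#2)%Q :: nil) s) (ppow ((1#2)%Q :: (1#2)%Q :: nil) (n - s)))) n.

Lemma Q2R_rn n : Q2R (rnQ n) = INR n + 3/2.
Proof. unfold rnQ. rewrite Q2R_plus, Q2R_inject. unfold Q2R; simpl. field. Qed.

Lemma jacobi_jcQ n y : jacobi (3/2) (3/2) n y = evalQ (jcQ n) y.
Proof.
  unfold jcQ, jacobi. rewrite evalQ_psum. apply sum_n_ext; intro s.
  rewrite evalQ_pscal, evalQ_pmul, !evalQ_ppow, Q2R_Qred, Q2R_mult, !Q2R_gb, Q2R_rn.
  simpl. unfold Q2R; simpl. rewrite Rmult_assoc. f_equal. f_equal; f_equal; field.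
Qed.

Lemma ex_derive_evalQ p y : ex_derive (evalQ p) y.
Proof.
  induction p as [|c p IH]; simpl.
  - apply ex_derive_const.
  - apply (ex_derive_plus (fun _ => Q2R c) (fun y => y * evalQ p y)).
    + apply ex_derive_const.
    + apply (ex_derive_mult (fun y => y) (evalQ p)); [apply ex_derive_id|exact IH].
Qed.

Definition gq (n k : nat) (p : list Q) (x : R) := Pj n (cos x) * cos x ^ k * evalQ p (cos x) * sin x ^ 4.

Lemma ex_RInt_gq n k p a b : ex_RInt (gq n k p) a b.
Proof.
  apply (ex_RInt_continuous (V:=R_CompleteNormedModule)). intros z _.
  apply (ex_derive_continuous (K:=R_AbsRing) (V:=R_NormedModule) (gq n k p)). unfold gq.
  apply (ex_derive_mult (fun x => Pj n (cos x) * cos x ^ k * evalQ p (cos x)) (fun x => sin x ^ 4)).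
  - apply (ex_derive_mult (fun x => Pj n (cos x) * cos x ^ k) (fun x => evalQ p (cos x))).
    + apply (ex_derive_mult (fun x => Pj n (cos x)) (fun x => cos x ^ k)).
      * apply ex_derive_Pjcos.
      * apply ex_derive_Reals_1. reg.
    + apply (ex_derive_comp (evalQ p) cos). apply ex_derive_evalQ. apply ex_derive_Reals_1. reg.
  - apply ex_derive_Reals_1. reg.
Qed.

Fixpoint IL (n k : nat) (p : list Q) : R :=
  match p with nil => 0 | c :: p' => Q2R c * Iq n k + IL n (S k) p' end.

Lemma RInt_gq n p : forall k, RInt (gq n k p) 0 PI = IL n k p.
Proof.
  induction p as [|c p IH]; intro k; simpl.
  - unfold gq; simpl. rewrite (RInt_ext _ (fun _ => 0)). 
    + rewrite RInt_const. unfold scal; simpl; unfold mult; simpl. ring.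
    + intros; simpl; ring.
  - rewrite <- (IH (S k)). unfold Iq.
    rewrite <- (RInt_scal (V:=R_CompleteNormedModule)) by apply ex_RInt_qf.
    rewrite <- (RInt_plus (V:=R_CompleteNormedModule)).
    + apply RInt_ext. intros x _. unfold gq, qf, scal, plus; simpl; unfold mult; simpl. ring.
    + apply (ex_RInt_scal (V:=R_CompleteNormedModule)). apply ex_RInt_qf.
    + apply ex_RInt_gq.
Qed.

Lemma IL_orth n p : forall k, (k + length p <= n)%nat -> IL n k p = 0.
Proof.
  induction p as [|c p IH]; intros k Hk; simpl in *; [reflexivity|].
  rewrite Iq_orth by lia. rewrite IH by lia. ring.
Qed.

Lemma Pj0 y : Pj 0 y = 1.
Proof. unfold Pj, Amp, mon, gen_binom. rewrite sum_O. simpl. field. Qed.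

Lemma sin4_id x : sin x ^ 4 = 3/8 - cos (2 * x) / 2 + cos (4 * x) / 8.
Proof.
  replace (4 * x) with (2 * (2 * x)) by ring.
  rewrite (cos_2a_sin (2 * x)), sin_2a, cos_2a_sin.
  assert (Hc : cos x ^ 2 = 1 - sin x ^ 2) by (pose proof (sin_sq x); lra).
  transitivity (3/8 - (1 - 2*sin x*sin x)/2 + (1 - 8 * sin x^2 * cos x ^ 2)/8). rewrite Hc. field. field.
Qed.

Lemma Iq00 : Iq 0 0 = 3 * PI / 8.
Proof.
  unfold Iq.
  pose (F := fun x => 3 * x / 8 - sin (2 * x) / 4 + sin (4 * x) / 32).
  assert (H : is_RInt (qf 0 0) 0 PI (minus (F PI) (F 0))).
  { apply (is_RInt_derive (V:=R_CompleteNormedModule) F).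
    - intros x _. eapply is_derive_eq.
      + unfold F. auto_derive; [easy|reflexivity].
      + unfold qf. rewrite Pj0, sin4_id. simpl. field.
    - intros x _. apply cont_qf. }
  rewrite (is_RInt_unique _ _ _ _ H). unfold minus, plus, opp, F; simpl.
  replace (2 * PI) with (0 + 2 * PI) by ring. replace (4 * PI) with (0 + 2 * PI + 2 * PI) by ring.
  rewrite Rmult_0_r, !sin_plus, sin_0, cos_0, sin_2PI, cos_2PI. rewrite ?Rmult_0_r, ?sin_0. field.
Qed.

Fixpoint wq (k : nat) : Q :=
  match k with
  | O => (3#8)%Q
  | S O => 0%Q
  | S (S k' as k1) => (wq k' * inject_Z (Z.of_nat (S k')) / inject_Z (Z.of_nat (k' + 6)))%Q
  end.

Lemma Q2R_inject_S k : Q2R (inject_Z (Z.pos (Pos.of_succ_nat k))) = INR (S k).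
Proof. exact (Q2R_inject (S k)). Qed.

Lemma Iq0_wq : forall k, Iq 0 k = PI * Q2R (wq k) /\ Iq 0 (S k) = PI * Q2R (wq (S k)).
Proof.
  induction k as [|k [IH1 IH2]].
  - split.
    + rewrite Iq00. unfold Q2R; simpl. field.
    + pose proof (Iq_rec 0 1) as E. simpl in E. simpl wq. rewrite RMicromega.Q2R_0.
      simpl INR in E. lra.
  - split; [exact IH2|].
    pose proof (Iq_rec 0 (S (S k))) as E. simpl pred in E. rewrite IH1 in E.
    simpl wq. rewrite Q2R_div, Q2R_mult, !Q2R_inject.
    + rewrite plus_INR in *. rewrite !S_INR in *. simpl INR in *.
      assert (0 <= INR k) by apply pos_INR.
      set (I := Iq 0 (S (S k))) in *.
      assert (HA : (INR k + 1 + 1) * (INR k + 1 + 1 + 4) - 0 * (0 + 4) <> 0) by nra.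
      replace I with (((INR k + 1 + 1) * (INR k + 1 + 1 + 4) - 0 * (0 + 4)) * I / ((INR k + 1 + 1) * (INR k + 1 + 1 + 4) - 0 * (0 + 4))) by (field; split; lra).
      rewrite E. rewrite Q2R_inject_S, S_INR. field. lra.
    + intro Hq. apply Qeq_eqR in Hq. rewrite Q2R_inject, RMicromega.Q2R_0 in Hq.
      rewrite plus_INR in Hq. simpl INR in Hq. pose proof (pos_INR k). lra.
Qed.

Fixpoint IQ (k : nat) (p : list Q) : Q :=
  match p with nil => 0%Q | c :: p' => (c * wq k + IQ (S k) p')%Q end.

Lemma IL0 p : forall k, IL 0 k p = PI * Q2R (IQ k p).
Proof.
  induction p as [|c p IH]; intro k; simpl.
  - rewrite RMicromega.Q2R_0; ring.
  - rewrite IH, (proj1 (Iq0_wq k)), Q2R_plus, Q2R_mult. ring.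
Qed.

Lemma int_evalQ p : RInt (fun x => evalQ p (cos x) * sin x ^ 4) 0 PI = PI * Q2R (IQ 0 p).
Proof.
  rewrite <- IL0, <- RInt_gq. apply RInt_ext. intros x _. unfold gq. rewrite Pj0. simpl. ring.
Qed.

Definition cq (i j m : nat) : Q := IQ 0 (pmul (pmul (jcQ i) (jcQ j)) (jcQ m)).
Definition sin2Q : list Q := (1 :: 0 :: (-1) :: nil)%Q.
Definition dq (g : nat) : Q := IQ 0 (pmul (pmul (pmul (jcQ g) (jcQ g)) (pmul (jcQ g) (jcQ g))) sin2Q).
Definition natQ (n : nat) : Q := inject_Z (Z.of_nat n).
Fixpoint hQ (n : nat) : Q := match n with O => 1%Q | S n' => ((5#2) + natQ n') * hQ n' end%Q.
Fixpoint factQ (n : nat) : Q := match n with O => 1%Q | S n' => (natQ n * factQ n')%Q end.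
Definition rQ (n : nat) : Q :=
  ((natQ n + 2) * factQ n * factQ (n + 3) / (8 * (hQ n * hQ n)))%Q.
Definition kQ (g nu : nat) : Q :=
  (2 / ((natQ nu + 2) * (natQ nu + 2)) + 1 / ((natQ nu + 2) * (natQ nu + 2) - (2 * (natQ g + 2)) * (2 * (natQ g + 2))))%Q.
Fixpoint Qsum (F : nat -> Q) (n : nat) : Q := match n with O => F O | S n' => Qred (Qsum F n' + F n) end.
Definition SQ (g : nat) : Q := Qsum (fun nu => Qred (rQ nu * (cq g g nu * cq g g nu) * kQ g nu)) (2 * g).
Definition check_g (g : nat) : bool :=
  negb (Qle_bool (dq g) 0) && Qle_bool (3 * dq g * ((83#50) * (83#50))) (54 * SQ g).


Lemma Q2R_natQ n : Q2R (natQ n) = INR n.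
Proof. apply Q2R_inject. Qed.

Lemma Q2R_factQ n : Q2R (factQ n) = INR (Factorial.fact n).
Proof.
  induction n as [|n IH]; simpl factQ.
  - apply RMicromega.Q2R_1.
  - rewrite Q2R_mult, IH, Q2R_natQ. change (Factorial.fact (S n)) with (S n * Factorial.fact n)%nat.
    rewrite mult_INR. reflexivity.
Qed.

Lemma Q2R_hQ n : Q2R (hQ n) = hR n.
Proof.
  induction n as [|n IH]; simpl.
  - apply RMicromega.Q2R_1.
  - rewrite Q2R_mult, Q2R_plus, IH, Q2R_natQ. replace (Q2R (5#2)) with (5/2) by (unfold Q2R; simpl; field). reflexivity.
Qed.

Lemma Q2R_mk a b : Q2R (a # b) = IZR a / IZR (Z.pos b).
Proof. reflexivity. Qed.

Lemma Qnz q : Q2R q <> 0 -> ~ (q == 0)%Q.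
Proof. intros H Hq. apply H. rewrite (Qeq_eqR _ _ Hq). apply RMicromega.Q2R_0. Qed.

Lemma Q2R_rQ n : Q2R (rQ n) = (INR n + 2) * INR (Factorial.fact n) * INR (Factorial.fact (n + 3)) / (8 * hR n ^ 2).
Proof.
  pose proof (hR_pos n).
  unfold rQ. rewrite Q2R_div.
  - rewrite !Q2R_mult, Q2R_plus, !Q2R_factQ, Q2R_natQ, Q2R_hQ, !Q2R_mk. field. lra.
  - apply Qnz. rewrite !Q2R_mult, Q2R_hQ, Q2R_mk. nra.
Qed.

Lemma Nfrak_sq_Q n : Nfrak n ^ 2 = Q2R (rQ n) / Gamma (5/2) ^ 2.
Proof.
  rewrite Nfrak_sq, Q2R_rQ. pose proof (hR_pos n). pose proof (proj1 (proj2 Gamma52_is)).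
  field. lra.
Qed.

Lemma evalQ_sin2 y : evalQ sin2Q y = 1 - y ^ 2.
Proof. unfold sin2Q. simpl. unfold Q2R; simpl. field. Qed.

Lemma efrak_eval n x : efrak n x = Nfrak n * evalQ (jcQ n) (cos x).
Proof. unfold efrak. rewrite jacobi_jcQ. reflexivity. Qed.

Lemma RInt_scal_R (f : R -> R) c a b : ex_RInt f a b -> RInt (fun x => c * f x) a b = c * RInt f a b.
Proof. intro H. apply (RInt_scal (V:=R_CompleteNormedModule)). exact H. Qed.

Lemma ex_RInt_evalQ p a b : ex_RInt (fun x => evalQ p (cos x) * sin x ^ 4) a b.
Proof.
  apply (ex_RInt_continuous (V:=R_CompleteNormedModule)). intros z _.
  apply (ex_derive_continuous (K:=R_AbsRing) (V:=R_NormedModule)).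
  apply (ex_derive_mult (fun x => evalQ p (cos x)) (fun x => sin x ^ 4)).
  - apply (ex_derive_comp (evalQ p) cos). apply ex_derive_evalQ. apply ex_derive_Reals_1. reg.
  - apply ex_derive_Reals_1. reg.
Qed.

Lemma RInt_extR (f g : R -> R) a b : (forall x, f x = g x) -> RInt f a b = RInt g a b.
Proof. intro H. apply RInt_ext. intros; apply H. Qed.

Lemma Cbar_val i j m : Cbar i j m = Nfrak i * Nfrak j * Nfrak m * (PI * Q2R (cq i j m)).
Proof.
  unfold Cbar, cq. rewrite <- int_evalQ, <- RInt_scal_R by apply ex_RInt_evalQ.
  apply RInt_extR. intros x. rewrite !efrak_eval, !evalQ_pmul. ring.
Qed.

Lemma C4_val g : C4 g g g g = Nfrak g ^ 4 * (PI * Q2R (dq g)).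
Proof.
  unfold C4, dq. rewrite <- int_evalQ, <- RInt_scal_R by apply ex_RInt_evalQ.
  apply RInt_extR. intros x. rewrite !efrak_eval, !evalQ_pmul, evalQ_sin2, <- sin_sq. ring.
Qed.

Lemma Qsum_val F n : Q2R (Qsum F n) = sum_n (fun i => Q2R (F i)) n.
Proof.
  induction n as [|n IH]; simpl.
  - rewrite sum_O. reflexivity.
  - rewrite Q2R_Qred, Q2R_plus, IH, sum_Sn. reflexivity.
Qed.

Lemma kQ_val g nu : (nu <= 2 * g)%nat ->
  Q2R (kQ g nu) = 2 / omega nu ^ 2 + 1 / (omega nu ^ 2 - (2 * omega g) ^ 2).
Proof.
  intro H. unfold kQ, omega.
  assert (Hn : INR nu <= INR (2 * g)) by (apply le_INR; exact H). rewrite mult_INR in Hn. simpl INR in Hn.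
  pose proof (pos_INR nu). pose proof (pos_INR g).
  rewrite Q2R_plus, !Q2R_div.
  - rewrite !Q2R_mult, !Q2R_minus, !Q2R_mult, !Q2R_plus, !Q2R_natQ, !Q2R_mk. simpl IZR. field.
    split; nra.
  - apply Qnz. rewrite !Q2R_minus, !Q2R_mult, !Q2R_plus, !Q2R_natQ, !Q2R_mk. simpl IZR. nra.
  - apply Qnz. rewrite !Q2R_mult, !Q2R_plus, !Q2R_natQ, !Q2R_mk. simpl IZR. nra.
Qed.

Lemma sum_n_scal_R (c : R) (u : nat -> R) n : sum_n (fun k => c * u k) n = c * sum_n u n.
Proof. apply (sum_n_mult_l (K:=R_Ring)). Qed.

Lemma qfrak_val g : qfrak g = 9/4 * (Nfrak g ^ 4 * PI ^ 2 / Gamma (5/2) ^ 2) * Q2R (SQ g).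
Proof.
  unfold qfrak, SQ. rewrite Qsum_val, Rmult_assoc. f_equal. rewrite <- sum_n_scal_R.
  apply sum_n_extR. intros nu Hnu.
  rewrite Q2R_Qred, !Q2R_mult, kQ_val by exact Hnu.
  rewrite Cbar_val. pose proof (proj1 (proj2 Gamma52_is)).
  replace ((Nfrak g * Nfrak g * Nfrak nu * (PI * Q2R (cq g g nu))) ^ 2)
    with (Nfrak g ^ 4 * PI ^ 2 * Nfrak nu ^ 2 * (Q2R (cq g g nu) * Q2R (cq g g nu))) by ring.
  rewrite Nfrak_sq_Q. unfold Rdiv. ring.
Qed.

Lemma check_all g : (g <= 5)%nat -> check_g g = true.
Proof.
  intro H. do 6 (destruct g as [|g]; [vm_compute; reflexivity|]). lia.
Qed.

Lemma ineq_part g : (g <= 5)%nat -> 8 * qfrak g > 3 * C4 g g g g.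
Proof.
  intro Hg. pose proof (check_all g Hg) as Hc. unfold check_g in Hc.
  apply andb_prop in Hc. destruct Hc as [H1 H2].
  assert (Hd : 0 < Q2R (dq g)).
  { rewrite <- RMicromega.Q2R_0. apply Qlt_Rlt. apply Qnot_le_lt. intro Hle.
    apply Qle_bool_iff in Hle. rewrite Hle in H1. discriminate. }
  assert (HS : 3 * Q2R (dq g) * ((83/50) * (83/50)) <= 54 * Q2R (SQ g)).
  { apply Qle_bool_iff in H2. apply Qle_Rle in H2. rewrite !Q2R_mult, !Q2R_mk in H2. simpl IZR in H2. lra. }
  rewrite qfrak_val, C4_val.
  destruct (proj2 Gamma52_is) as [HG1 HG2].
  pose proof (Nfrak_pos g) as HN. pose proof PI2_3_2 as Hpi.
  set (G := Gamma (5/2)) in *. set (N := Nfrak g) in *. set (S := Q2R (SQ g)) in *. set (d := Q2R (dq g)) in *.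
  assert (HN4 : 0 < N ^ 4) by (apply pow_lt; exact HN).
  assert (HG2' : G ^ 2 <= (83/50) * (83/50)) by nra.
  assert (HGp : 0 < G ^ 2) by nra.
  assert (Hkey : 3 * d * G ^ 2 < 18 * PI * S) by nra.
  apply Rlt_gt.
  replace (8 * (9 / 4 * (N ^ 4 * PI ^ 2 / G ^ 2) * S)) with ((N ^ 4 * PI / G ^ 2) * (18 * PI * S)) by (field; lra).
  replace (3 * (N ^ 4 * (PI * d))) with ((N ^ 4 * PI / G ^ 2) * (3 * d * G ^ 2)) by (field; lra).
  apply Rmult_lt_compat_l; [|exact Hkey].
  apply Rdiv_lt_0_compat; [apply Rmult_lt_0_compat; lra|lra].
Qed.

Lemma efrak_Pj n x : efrak n x = Nfrak n * Pj n (cos x).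
Proof. unfold efrak. rewrite Pj_jacobi. reflexivity. Qed.

Lemma Cbar_zero i j m : (length (pmul (jcQ i) (jcQ j)) <= m)%nat -> Cbar i j m = 0.
Proof.
  intro H. unfold Cbar.
  rewrite (RInt_extR _ (fun x => (Nfrak i * Nfrak j * Nfrak m) * gq m 0 (pmul (jcQ i) (jcQ j)) x)).
  - rewrite RInt_scal_R by apply ex_RInt_gq. rewrite RInt_gq, IL_orth by (simpl; exact H). ring.
  - intro x. unfold gq. rewrite (efrak_Pj m), !efrak_eval, evalQ_pmul. simpl. ring.
Qed.

Definition c4p (g : nat) := pmul (pmul (jcQ g) (jcQ g)) (pmul (jcQ g) sin2Q).

Lemma C4_zero g m : (length (c4p g) <= m)%nat -> C4 g g g m = 0.
Proof.
  intro H. unfold C4.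
  rewrite (RInt_extR _ (fun x => (Nfrak g * Nfrak g * Nfrak g * Nfrak m) * gq m 0 (c4p g) x)).
  - rewrite RInt_scal_R by apply ex_RInt_gq. rewrite RInt_gq, IL_orth by (simpl; exact H). ring.
  - intro x. unfold gq, c4p. rewrite (efrak_Pj m), !efrak_eval, !evalQ_pmul, evalQ_sin2, <- sin_sq. simpl. ring.
Qed.

Definition lens (g : nat) : bool :=
  Nat.leb (length (pmul (jcQ g) (jcQ g))) (2 * g + 1) &&
  forallb (fun nu => Nat.leb (length (pmul (jcQ g) (jcQ nu))) (3 * g + 4)) (seq 0 (2 * g + 1)) &&
  Nat.leb (length (c4p g)) (3 * g + 3).

Lemma lens_all g : (g <= 5)%nat -> lens g = true.
Proof. intro H. do 6 (destruct g as [|g]; [vm_compute; reflexivity|]). lia. Qed.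

Lemma lens_spec g : (g <= 5)%nat ->
  (forall nu, (2 * g < nu)%nat -> Cbar g g nu = 0) /\
  (forall nu, (nu <= 2 * g)%nat -> Cbar g nu (3 * g + 4) = 0) /\
  (forall m, (3 * g + 3 <= m)%nat -> C4 g g g m = 0).
Proof.
  intro Hg. pose proof (lens_all g Hg) as H. unfold lens in H.
  apply andb_prop in H as [H H3]. apply andb_prop in H as [H1 H2].
  apply Nat.leb_le in H1. apply Nat.leb_le in H3. rewrite forallb_forall in H2.
  split; [|split].
  - intros nu Hnu. apply Cbar_zero. lia.
  - intros nu Hnu. apply Cbar_zero.
    specialize (H2 nu). apply Nat.leb_le. apply H2. apply in_seq. lia.
  - intros m Hm. apply C4_zero. lia.
Qed.

Lemma omega_pos n : 0 < omega n.
Proof. unfold omega. pose proof (pos_INR n). lra. Qed.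

Lemma Cbar_sym i j m : Cbar i j m = Cbar i m j.
Proof. unfold Cbar. apply RInt_extR. intro x. ring. Qed.

Lemma ex_RInt_trig g m : ex_RInt (fun t => cos (omega g * t) ^ 3 * cos (omega m * t)) 0 (2 * PI).
Proof.
  apply (ex_RInt_continuous (V:=R_CompleteNormedModule)). intros z _.
  apply (ex_derive_continuous (K:=R_AbsRing) (V:=R_NormedModule)). apply ex_derive_Reals_1. reg.
Qed.

Lemma avg_val K g m : avg_f3 (fun n => if Nat.eqb n g then K else 0) m =
  - C4 g g g m * K ^ 3 * RInt (fun t => cos (omega g * t) ^ 3 * cos (omega m * t)) 0 (2 * PI) / (2 * PI).
Proof.
  unfold avg_f3.
  rewrite (RInt_extR _ (fun t => (- C4 g g g m * K ^ 3) * (cos (omega g * t) ^ 3 * cos (omega m * t)))).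
  - rewrite RInt_scal_R by apply ex_RInt_trig. pose proof PI_RGT_0. field. lra.
  - intro t. unfold Phi, f3.
    rewrite (Series3_single g (fun i j k => C4 i j k m * ((if Nat.eqb i g then K else 0) * cos (omega i * t)) *
        ((if Nat.eqb j g then K else 0) * cos (omega j * t)) * ((if Nat.eqb k g then K else 0) * cos (omega k * t)))).
    + rewrite Nat.eqb_refl. ring.
    + intros i j k [Hi|[Hj|Hk]].
      * apply Nat.eqb_neq in Hi. rewrite Hi. ring.
      * apply Nat.eqb_neq in Hj. rewrite Hj. ring.
      * apply Nat.eqb_neq in Hk. rewrite Hk. ring.
Qed.

Lemma F0_val K g m : (g <= 5)%nat -> F0 (fun n => if Nat.eqb n g then K else 0) m =
  9 / 4 * sum_n (fun nu => Cbar g nu m * (res_coef nu (omega g - omega g) * Cbar g g nu * K * K * K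
                                           * sum_pm (omega g - omega g) (omega g) (omega m))) (2 * g) +
  9 / 4 * sum_n (fun nu => Cbar g nu m * (res_coef nu (omega g + omega g) * Cbar g g nu * K * K * K
                                           * sum_pm (omega g + omega g) (omega g) (omega m))) (2 * g).
Proof.
  intro Hg. destruct (lens_spec g Hg) as [Z1 _].
  unfold F0.
  rewrite (collapse (fun k nu i j => res_coef nu (omega i - omega j) * Cbar i j nu * (if Nat.eqb i g then K else 0)
      * (if Nat.eqb j g then K else 0) * (if Nat.eqb k g then K else 0) * sum_pm (omega i - omega j) (omega k) (omega m))
      (fun k nu => Cbar k nu m) g (2 * g)).
  rewrite (collapse (fun k nu i j => res_coef nu (omega i + omega j) * Cbar i j nu * (if Nat.eqb i g then K else 0)
      * (if Nat.eqb j g then K else 0) * (if Nat.eqb k g then K else 0) * sum_pm (omega i + omega j) (omega k) (omega m))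
      (fun k nu => Cbar k nu m) g (2 * g)).
  - rewrite Nat.eqb_refl. reflexivity.
  - intros k nu i j [Hi|[Hj|Hk]].
    + apply Nat.eqb_neq in Hi. rewrite Hi. ring.
    + apply Nat.eqb_neq in Hj. rewrite Hj. ring.
    + apply Nat.eqb_neq in Hk. rewrite Hk. ring.
  - intros nu Hnu. rewrite Z1 by exact Hnu. ring.
  - intros k nu i j [Hi|[Hj|Hk]].
    + apply Nat.eqb_neq in Hi. rewrite Hi. ring.
    + apply Nat.eqb_neq in Hj. rewrite Hj. ring.
    + apply Nat.eqb_neq in Hk. rewrite Hk. ring.
  - intros nu Hnu. rewrite Z1 by exact Hnu. ring.
Qed.

Lemma INR_ne a b : a <> b -> INR a <> INR b.
Proof. apply not_INR. Qed.

Lemma sp1_eq g : sum_pm (omega g - omega g) (omega g) (omega g) = 2.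
Proof.
  unfold sum_pm. pose proof (omega_pos g).
  replace (omega g - omega g + omega g - omega g) with 0 by ring.
  replace (omega g - omega g - omega g + omega g) with 0 by ring.
  rewrite ind0_0, !ind0_nz by lra. ring.
Qed.

Lemma sp1_ne g m : m <> g -> sum_pm (omega g - omega g) (omega g) (omega m) = 0.
Proof.
  intro H. pose proof (INR_ne _ _ H). unfold sum_pm, omega in *. pose proof (pos_INR g). pose proof (pos_INR m).
  rewrite !ind0_nz by lra. ring.
Qed.

Lemma sp2_g g : sum_pm (omega g + omega g) (omega g) (omega g) = 1.
Proof.
  unfold sum_pm. pose proof (omega_pos g).
  replace (omega g + omega g - omega g - omega g) with 0 by ring.
  rewrite ind0_0, !ind0_nz by lra. ring.
Qed.

Lemma sp2_ne g m : m <> g -> m <> (3 * g + 4)%nat -> sum_pm (omega g + omega g) (omega g) (omega m) = 0.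
Proof.
  intros H1 H2. pose proof (INR_ne _ _ H1). pose proof (INR_ne _ _ H2).
  rewrite plus_INR, mult_INR in *. simpl INR in *.
  unfold sum_pm, omega in *. pose proof (pos_INR g). pose proof (pos_INR m).
  rewrite !ind0_nz by lra. ring.
Qed.

Lemma res_0 g nu : res_coef nu (omega g - omega g) = / omega nu ^ 2.
Proof.
  unfold res_coef. pose proof (omega_pos nu). replace (omega g - omega g) with 0 by ring.
  destruct (Req_EM_T 0 (omega nu)); [lra|]. destruct (Req_EM_T 0 (- omega nu)); [lra|].
  f_equal. ring.
Qed.

Lemma res_2 g nu : (nu <= 2 * g)%nat -> res_coef nu (omega g + omega g) = / (omega nu ^ 2 - (2 * omega g) ^ 2).
Proof.
  intro H. assert (Hn : INR nu <= INR (2 * g)) by (apply le_INR; exact H). rewrite mult_INR in Hn. simpl INR in Hn.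
  unfold res_coef. pose proof (omega_pos nu). pose proof (omega_pos g).
  destruct (Req_EM_T (omega g + omega g) (omega nu)) as [E|E]; [unfold omega in E; lra|].
  destruct (Req_EM_T (omega g + omega g) (- omega nu)); [lra|].
  f_equal. ring.
Qed.

Lemma sum_n_comb (f h q : nat -> R) c N :
  (forall nu, (nu <= N)%nat -> f nu + h nu = c * q nu) ->
  9 / 4 * sum_n f N + 9 / 4 * sum_n h N = c * (9 / 4 * sum_n q N).
Proof.
  intro H. induction N as [|N IH].
  - rewrite !sum_O. transitivity (9 / 4 * (f O + h O)); [ring|]. rewrite H by lia. ring.
  - rewrite !sum_Sn. unfold plus; simpl.
    transitivity (9/4 * sum_n f N + 9/4 * sum_n h N + 9/4 * (f (S N) + h (S N))); [ring|].
    rewrite IH by (intros; apply H; lia). rewrite H by lia. ring.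
Qed.

Theorem main_thm (g : nat) (Hg : (g <= 5)%nat) :
  8 * qfrak g > 3 * C4 g g g g /\
  forall K : R,
    (K = 2 * omega g * sqrt (2 / (8 * qfrak g - 3 * C4 g g g g)) \/
     K = - (2 * omega g * sqrt (2 / (8 * qfrak g - 3 * C4 g g g g)))) ->
    forall m : nat, M_minus (fun n => if Nat.eqb n g then K else 0) m = 0.
Proof.
  split; [apply ineq_part; exact Hg|].
  intros K HK m. pose proof (ineq_part g Hg) as Hineq.
  set (D := 8 * qfrak g - 3 * C4 g g g g) in *.
  assert (HD : 0 < D) by (unfold D; lra).
  assert (HK2 : K ^ 2 = 8 * omega g ^ 2 / D).
  { assert (Hs : sqrt (2 / D) * sqrt (2 / D) = 2 / D) by (apply sqrt_sqrt; left; apply Rdiv_lt_0_compat; lra).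
    destruct HK as [-> | ->].
    - transitivity (4 * omega g ^ 2 * (sqrt (2 / D) * sqrt (2 / D))); [ring|]. rewrite Hs. field. lra.
    - transitivity (4 * omega g ^ 2 * (sqrt (2 / D) * sqrt (2 / D))); [ring|]. rewrite Hs. field. lra. }
  destruct (lens_spec g Hg) as [Z1 [Z2 Z3]].
  unfold M_minus. rewrite avg_val, F0_val by exact Hg. unfold Aop.
  destruct (Nat.eq_dec m g) as [->|Hm].
  - rewrite trig_int_eq, Nat.eqb_refl.
    match goal with |- context [9 / 4 * sum_n ?f ?N + 9 / 4 * sum_n ?h ?N] =>
      assert (HF : 9 / 4 * sum_n f N + 9 / 4 * sum_n h N = K ^ 3 * qfrak g) end.
    { unfold qfrak. apply sum_n_comb. intros nu Hnu. rewrite sp1_eq, sp2_g, res_0, res_2 by exact Hnu. rewrite <- Cbar_sym.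
        pose proof (omega_pos nu).
        assert (omega nu ^ 2 - (2 * omega g) ^ 2 <> 0).
        { assert (Hn : INR nu <= INR (2 * g)) by (apply le_INR; exact Hnu). rewrite mult_INR in Hn. simpl INR in Hn.
          unfold omega in *. pose proof (pos_INR g). nra. }
        field. split; [assumption|lra]. }
    rewrite HF.
    pose proof PI_RGT_0.
    replace (K ^ 3) with (K * K ^ 2) by ring. rewrite HK2.
    unfold D in *. field. split; lra.
  - assert (Hf : Nat.eqb m g = false) by (apply Nat.eqb_neq; exact Hm). rewrite Hf.
    assert (HA : - C4 g g g m * K ^ 3 * RInt (fun t => cos (omega g * t) ^ 3 * cos (omega m * t)) 0 (2 * PI) / (2 * PI) = 0).
    { destruct (Nat.eq_dec m (3 * g + 4)) as [E|E].
      - rewrite Z3 by lia. unfold Rdiv. ring.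
      - rewrite trig_int_ne by assumption. unfold Rdiv. ring. }
    rewrite HA.
    rewrite (sum_n_zero (fun nu => Cbar g nu m * (res_coef nu (omega g - omega g) * Cbar g g nu * K * K * K *
        sum_pm (omega g - omega g) (omega g) (omega m)))).
    2:{ intros nu _. rewrite sp1_ne by exact Hm. ring. }
    rewrite (sum_n_zero (fun nu => Cbar g nu m * (res_coef nu (omega g + omega g) * Cbar g g nu * K * K * K *
        sum_pm (omega g + omega g) (omega g) (omega m)))).
    2:{ intros nu Hnu. destruct (Nat.eq_dec m (3 * g + 4)) as [E|E].
        - rewrite E, Z2 by exact Hnu. ring.
        - rewrite sp2_ne by assumption. ring. }
    ring.
Qed.

Open Scope R_scope.

Theorem lemma6p6 (g : nat) (Hg : (g <= 5)%nat) :
  8 * qfrak g > 3 * C4 g g g g /\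
  forall K : R,
    (K = 2 * omega g * sqrt (2 / (8 * qfrak g - 3 * C4 g g g g)) \/
     K = - (2 * omega g * sqrt (2 / (8 * qfrak g - 3 * C4 g g g g)))) ->
    forall m : nat, M_minus (fun n => if Nat.eqb n g then K else 0) m = 0.
Proof. exact (main_thm g Hg). Qed.
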